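(* Let $q\in C^\infty(\mathbb{R})$ be strictly positive, let $p(t)=\frac1{q(t)}\left(\frac54\left(\frac{q'(t)}{q(t)}\right)^2-\frac{q''(t)}{q(t)}\right)$, and suppose there are real numbers $0<\eta_1<\eta_2$ with $$\eta_1\le q(t)\le\eta_2,\qquad \left|\frac{q'(t)}{q(t)}\right|\le\eta_2,\qquad |p(t)|\le\eta_2\qquad\text{for all }0\le t\le1.$$ Let $\lambda>0$ and $\epsilon$ be real numbers with $0<\epsilon<\lambda\exp(\eta_2^{3/4}/4)$, and let $$k=20\left(\frac{\eta_2}{\eta_1}\right)^2+8\eta_2^2+10\frac{\eta_2}{\eta_1}+1.$$ Suppose $p_b:\mathbb{R}\to\mathbb{R}$ is infinitely differentiable with $$\sup_{0\le t\le1}|p(t)-p_b(t)|\le\frac12\frac{\eta_1}{\lambda}e^{-k}\exp\!\left(-\frac{\eta_2^{3/4}}{4}\right)\epsilon .$$ Then there exists a function $q_b:[0,1]\to\mathbb{R}$ such that $$\frac1{q_b(t)}\left(\frac54\left(\frac{q_b'(t)}{q_b(t)}\right)^2-\frac{q_b''(t)}{q_b(t)}\right)=p_b(t)\quad\text{for }0\le t\le1,$$ and every phase function for $y''(t)+\lambda^2q_b(t)y(t)=0$ on $[0,1]$ is an $\epsilon$-approximate phase function for $y''(t)+\lambda^2q(t)y(t)=0$ on $[0,1]$.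
   Context: A sufficiently smooth $\alpha:[0,1]\to\mathbb{R}$ is a phase function for $y''+\lambda^2 Q y=0$ on $[0,1]$ if $\cos(\alpha)/|\alpha'|^{1/2}$ and $\sin(\alpha)/|\alpha'|^{1/2}$ form a basis of its solution space on $[0,1]$. $\alpha$ is an $\epsilon$-approximate phase function for $y''+\lambda^2qy=0$ on $[0,1]$ if, with $u=\sin(\alpha)/|\alpha'|^{1/2}$ and $v=\cos(\alpha)/|\alpha'|^{1/2}$, there is a basis $\{\tilde u,\tilde v\}$ of solutions of $y''+\lambda^2qy=0$ with $|u(t)-\tilde u(t)|\le\epsilon\sup_{[0,1]}|\tilde u|$ and $|v(t)-\tilde v(t)|\le\epsilon\sup_{[0,1]}|\tilde v|$ for all $0\le t\le1$. *)

(* Defs.v *)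
From Stdlib Require Import Reals Lra.
Open Scope R_scope.

Definition is_derivs (f : R -> R) (D : nat -> R -> R) : Prop :=
  D 0%nat = f /\ forall (n : nat) (x : R), derivable_pt_lim (D n) x (D (S n) x).

Definition smooth (f : R -> R) : Prop := exists D, is_derivs f D.

Definition in01 (t : R) : Prop := 0 <= t <= 1.

(* f' is the derivative of f on [0,1] (one-sided at the endpoints),
   i.e. the derivative of the restriction of f to [0,1]. *)
Definition has_deriv_on01 (f f' : R -> R) : Prop :=
  forall x, in01 x ->
    limit1_in (fun y => (f y - f x) / (y - x)) (fun y => in01 y /\ y <> x) (f' x) x.

Definition is_solution01 (lam : R) (Q y : R -> R) : Prop :=
  exists y1 y2 : R -> R,
    has_deriv_on01 y y1 /\ has_deriv_on01 y1 y2 /\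
    forall t, in01 t -> y2 t + lam ^ 2 * Q t * y t = 0.

Definition is_basis01 (lam : R) (Q u v : R -> R) : Prop :=
  is_solution01 lam Q u /\ is_solution01 lam Q v /\
  (forall a b : R, (forall t, in01 t -> a * u t + b * v t = 0) -> a = 0 /\ b = 0) /\
  (forall y, is_solution01 lam Q y ->
     exists a b : R, forall t, in01 t -> y t = a * u t + b * v t).

Definition phase_u (alpha alpha' : R -> R) (t : R) : R :=
  sin (alpha t) / sqrt (Rabs (alpha' t)).
Definition phase_v (alpha alpha' : R -> R) (t : R) : R :=
  cos (alpha t) / sqrt (Rabs (alpha' t)).

Definition is_phase_function (lam : R) (Q alpha alpha' : R -> R) : Prop :=
  has_deriv_on01 alpha alpha' /\
  (forall t, in01 t -> alpha' t <> 0) /\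
  is_basis01 lam Q (phase_u alpha alpha') (phase_v alpha alpha').

Definition is_sup_abs01 (f : R -> R) (M : R) : Prop :=
  is_lub (fun r => exists t, in01 t /\ r = Rabs (f t)) M.

Definition is_approx_phase_function (eps lam : R) (q alpha alpha' : R -> R) : Prop :=
  exists tu tv : R -> R,
    is_basis01 lam q tu tv /\
    (exists Mu Mv : R,
       is_sup_abs01 tu Mu /\ is_sup_abs01 tv Mv /\
       forall t, in01 t ->
         Rabs (phase_u alpha alpha' t - tu t) <= eps * Mu /\
         Rabs (phase_v alpha alpha' t - tv t) <= eps * Mv).

Definition p_of (q q1 q2 : R -> R) (t : R) : R :=
  / q t * (5 / 4 * (q1 t / q t) ^ 2 - q2 t / q t).

(* Main.v *)
Require Import Defs.
From Stdlib Require Import Reals Lra Lia Psatz.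
From Coquelicot Require Import Coquelicot.
Open Scope R_scope.


Lemma limit1_in_iff f D l x0 :
  limit1_in f D l x0 <->
  forall eps, 0 < eps -> exists alp, 0 < alp /\
     forall x, D x -> Rabs (x - x0) < alp -> Rabs (f x - l) < eps.
Proof.
  unfold limit1_in, limit_in; simpl; unfold R_dist; split.
  - intros H eps He; destruct (H eps He) as [a [Ha H']]; exists a; split; auto.
  - intros H eps He; destruct (H eps He) as [a [Ha H']]; exists a; split; auto.
    intros x [Hx1 Hx2]; auto.
Qed.

Lemma cont_iff f x : continuity_pt f x <->
  forall eps, 0 < eps -> exists alp, 0 < alp /\
     forall y, Rabs (y - x) < alp -> Rabs (f y - f x) < eps.
Proof.
  unfold continuity_pt, continue_in. rewrite limit1_in_iff. split.
  - intros H eps He; destruct (H eps He) as [a [Ha H']]; exists a; split; auto.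
    intros y Hy. destruct (Req_dec y x) as [->|Hn].
    + replace (f x - f x) with 0 by ring; rewrite Rabs_R0; auto.
    + apply H'; auto. unfold D_x, no_cond; auto.
  - intros H eps He; destruct (H eps He) as [a [Ha H']]; exists a; split; auto.
Qed.

Lemma cont_of_lip f x c : 0 <= c ->
  (forall y, Rabs (f y - f x) <= c * Rabs (y - x)) -> continuity_pt f x.
Proof.
  intros Hc H. apply cont_iff. intros eps He.
  exists (eps / (c + 1)). split. apply Rdiv_lt_0_compat; lra.
  intros y Hy. eapply Rle_lt_trans. apply H.
  apply Rle_lt_trans with ((c+1) * Rabs (y - x)).
  apply Rmult_le_compat_r; [apply Rabs_pos|lra].
  replace eps with ((c+1) * (eps / (c+1))) by (field; lra).
  apply Rmult_lt_compat_l; lra.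
Qed.

Definition clamp (t : R) : R := Rmax 0 (Rmin 1 t).

Ltac clamp_cases t :=
  destruct (Rle_or_lt 1 t); [rewrite (Rmin_left 1 t) by lra | rewrite (Rmin_right 1 t) by lra];
  try (destruct (Rle_or_lt 0 t); [rewrite (Rmax_right 0 t) by lra | rewrite (Rmax_left 0 t) by lra]);
  try rewrite (Rmax_right 0 1) by lra.

Lemma clamp_in01 t : in01 (clamp t).
Proof. unfold clamp, in01. clamp_cases t; lra. Qed.

Lemma clamp_id t : in01 t -> clamp t = t.
Proof. unfold clamp, in01. intros. clamp_cases t; lra. Qed.

Lemma clamp_lip x y : Rabs (clamp x - clamp y) <= Rabs (x - y).
Proof.
  unfold clamp. clamp_cases x; clamp_cases y;
  unfold Rabs; repeat match goal with |- context [Rcase_abs ?a] => destruct (Rcase_abs a) end; lra.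
Qed.

Lemma clamp_cont t : continuity_pt clamp t.
Proof. apply (cont_of_lip _ _ 1); [lra|]. intros; rewrite Rmult_1_l; apply clamp_lip. Qed.

Lemma dpl_ext f g x l : (forall y, f y = g y) -> derivable_pt_lim f x l -> derivable_pt_lim g x l.
Proof.
  intros E H eps He. destruct (H eps He) as [d Hd]. exists d. intros h H1 H2.
  rewrite <- !E. auto.
Qed.

Lemma dpl_l f x l l' : l = l' -> derivable_pt_lim f x l -> derivable_pt_lim f x l'.
Proof. intros ->; auto. Qed.

Lemma der_in01 f x l : derivable_pt_lim f x l ->
  limit1_in (fun y => (f y - f x) / (y - x)) (fun y => in01 y /\ y <> x) l x.
Proof.
  intros H. apply limit1_in_iff. intros eps He. destruct (H eps He) as [d Hd].
  exists d. split. apply cond_pos. intros y [_ Hy] Hyd.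
  specialize (Hd (y - x)). replace (x + (y - x)) with y in Hd by ring.
  apply Hd; auto. lra.
Qed.

Lemma has_deriv_of f f' : (forall x, in01 x -> derivable_pt_lim f x (f' x)) -> has_deriv_on01 f f'.
Proof. intros H x Hx. apply der_in01; auto. Qed.

Lemma has_deriv_int f f' x : has_deriv_on01 f f' -> 0 < x < 1 -> derivable_pt_lim f x (f' x).
Proof.
  intros H Hx eps He. destruct (proj1 (limit1_in_iff _ _ _ _) (H x ltac:(unfold in01; lra)) eps He) as [a [Ha Ha']].
  assert (Hd : 0 < Rmin a (Rmin x (1 - x))).
  { apply Rmin_pos; [lra|apply Rmin_pos; lra]. }
  exists (mkposreal _ Hd). simpl. intros h Hh Hhd.
  assert (Hm1 := Rmin_l a (Rmin x (1-x))). assert (Hm2 := Rmin_r a (Rmin x (1-x))).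
  assert (Hm3 := Rmin_l x (1-x)). assert (Hm4 := Rmin_r x (1-x)).
  specialize (Ha' (x + h)). replace (x + h - x) with h in Ha' by ring. apply Ha'.
  - split. unfold in01. apply Rabs_def2 in Hhd. lra. lra.
  - lra.
Qed.

Lemma limit_within_of_cont f x D : continuity_pt f x -> limit1_in f D (f x) x.
Proof.
  intros H. apply limit1_in_iff. intros eps He. destruct (proj1 (cont_iff _ _) H eps He) as [a [Ha H']].
  exists a; split; auto.
Qed.

Lemma contw_of_has_deriv f f' x : has_deriv_on01 f f' -> in01 x -> limit1_in f in01 (f x) x.
Proof.
  intros H Hx. apply limit1_in_iff. intros eps He.
  destruct (proj1 (limit1_in_iff _ _ _ _) (H x Hx) 1 ltac:(lra)) as [a [Ha Ha']].
  exists (Rmin a (eps / (Rabs (f' x) + 1 + 1))). split.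
  { apply Rmin_pos; auto. apply Rdiv_lt_0_compat; [lra|]. pose proof (Rabs_pos (f' x)); lra. }
  intros y Hy Hyx.
  assert (Hm1 := Rmin_l a (eps / (Rabs (f' x) + 1 + 1))). assert (Hm2 := Rmin_r a (eps / (Rabs (f' x) + 1 + 1))).
  destruct (Req_dec y x) as [->|Hn]. { replace (f x - f x) with 0 by ring. rewrite Rabs_R0; lra. }
  specialize (Ha' y (conj Hy Hn) ltac:(lra)).
  assert (Hq : Rabs ((f y - f x) / (y - x)) <= Rabs (f' x) + 1).
  { pose proof (Rabs_triang_inv ((f y - f x) / (y - x)) (f' x)). lra. }
  replace (f y - f x) with ((f y - f x) / (y - x) * (y - x)) by (field; lra).
  rewrite Rabs_mult.
  assert (0 < Rabs (f' x) + 1 + 1) by (pose proof (Rabs_pos (f' x)); lra).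
  apply Rle_lt_trans with ((Rabs (f' x) + 1 + 1) * Rabs (y - x)).
  apply Rmult_le_compat_r. apply Rabs_pos. lra.
  apply Rlt_le_trans with ((Rabs (f' x) + 1 + 1) * (eps / (Rabs (f' x) + 1 + 1))).
  apply Rmult_lt_compat_l; lra. right; field; lra.
Qed.

Lemma limit1_in_ext f g D l x : (forall y, D y -> f y = g y) -> limit1_in f D l x -> limit1_in g D l x.
Proof.
  intros E H. apply limit1_in_iff. intros eps He.
  destruct (proj1 (limit1_in_iff _ _ _ _) H eps He) as [a [Ha H']]. exists a; split; auto.
  intros y Dy Hy. rewrite <- E; auto.
Qed.

Lemma has_deriv_lin a f f' b g g' : has_deriv_on01 f f' -> has_deriv_on01 g g' ->
  has_deriv_on01 (fun t => a * f t + b * g t) (fun t => a * f' t + b * g' t).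
Proof.
  intros Hf Hg x Hx.
  apply limit1_in_ext with (fun y => (fun _ => a) y * (fun y => (f y - f x) / (y - x)) y +
                                     (fun _ => b) y * (fun y => (g y - g x) / (y - x)) y).
  { intros y [_ Hy]. field. lra. }
  apply limit_plus; apply limit_mul; try apply (limit_free (fun _ => _)); auto.
Qed.

Lemma Rabs_le_inv' a b : Rabs a <= b -> - b <= a <= b.
Proof. unfold Rabs; destruct (Rcase_abs a); lra. Qed.

Lemma exp_le x y : x <= y -> exp x <= exp y.
Proof. intros H. destruct H as [H|H]. left; apply exp_increasing; auto. right; rewrite H; auto. Qed.


Lemma mono01 (F F' : R -> R) :
  (forall x, in01 x -> limit1_in F in01 (F x) x) ->
  (forall x, 0 < x < 1 -> derivable_pt_lim F x (F' x)) ->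
  (forall x, 0 < x < 1 -> F' x <= 0) ->
  forall t, in01 t -> F t <= F 0.
Proof.
  intros Hc Hd Hn.
  assert (S1 : forall s t, 0 < s -> s < t -> t < 1 -> F t <= F s).
  { intros s t H1 H2 H3. destruct (MVT_cor2 F F' s t H2) as [c [Hc1 Hc2]].
    - intros c Hc'. apply Hd; lra.
    - assert (F' c <= 0) by (apply Hn; lra). nra. }
  assert (S2 : forall t, 0 < t < 1 -> F t <= F 0).
  { intros t Ht. destruct (Rle_or_lt (F t) (F 0)) as [|Hlt]; auto. exfalso.
    destruct (proj1 (limit1_in_iff _ _ _ _) (Hc 0 ltac:(unfold in01; lra)) (F t - F 0) ltac:(lra)) as [a [Ha H]].
    assert (Hs1 := Rmin_l (a/2) (t/2)). assert (Hs2 := Rmin_r (a/2) (t/2)).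
    assert (Hs3 : 0 < Rmin (a/2) (t/2)) by (apply Rmin_pos; lra).
    revert Hs1 Hs2 Hs3. generalize (Rmin (a/2) (t/2)). intros s Hs1 Hs2 Hs3.

    specialize (H s ltac:(unfold in01; lra) ltac:(rewrite Rabs_right; lra)).
    specialize (S1 s t ltac:(lra) ltac:(lra) ltac:(lra)).
    apply Rabs_def2 in H. destruct H. lra. }
  intros t [Ht0 Ht1].
  destruct (Req_dec t 0) as [->|Hn0]; [lra|].
  destruct (Req_dec t 1) as [->|Hn1]; [|apply S2; lra].
  destruct (Rle_or_lt (F 1) (F 0)) as [|Hlt]; auto. exfalso.
  destruct (proj1 (limit1_in_iff _ _ _ _) (Hc 1 ltac:(unfold in01; lra)) (F 1 - F 0) ltac:(lra)) as [a [Ha H]].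
  assert (Hs1 := Rmax_l (1 - a/2) (1/2)). assert (Hs2 := Rmax_r (1 - a/2) (1/2)).
  assert (Hs3 : Rmax (1 - a/2) (1/2) < 1) by (unfold Rmax; destruct (Rle_dec _ _); lra).
  revert Hs1 Hs2 Hs3. generalize (Rmax (1 - a/2) (1/2)). intros s Hs1 Hs2 Hs3.
  specialize (H s ltac:(unfold in01; lra) ltac:(rewrite Rabs_left; lra)).
  specialize (S2 s ltac:(lra)). apply Rabs_def2 in H. destruct H. lra.
Qed.

Lemma limit_exp_neg K x : limit1_in (fun y => exp (- K * y)) in01 (exp (- K * x)) x.
Proof.
  apply (limit_within_of_cont (fun y => exp (- K * y))).
  apply derivable_continuous_pt. exists (exp (- K * x) * (- K * 1)).
  apply (derivable_pt_lim_comp (fun y => - K * y) exp).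
  - apply (derivable_pt_lim_scal (fun y => y)). apply derivable_pt_lim_id.
  - apply derivable_pt_lim_exp.
Qed.

Lemma gronwall (E E' : R -> R) (K B : R) :
  0 < K ->
  (forall x, in01 x -> limit1_in E in01 (E x) x) ->
  (forall x, 0 < x < 1 -> derivable_pt_lim E x (E' x)) ->
  (forall x, 0 < x < 1 -> E' x <= K * E x + B) ->
  forall t, in01 t -> E t <= (E 0 + B / K) * exp (K * t) - B / K.
Proof.
  intros HK Hc Hd Hb t Ht.
  set (F := fun x => (E x + B / K) * exp (- K * x)).
  set (F' := fun x => (E' x - K * E x - B) * exp (- K * x)).
  assert (HF : F t <= F 0).
  { apply (mono01 F F'); auto.
    - intros x Hx. unfold F. apply (limit_mul (fun y => E y + B / K) (fun y => exp (- K * y))).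
      apply (limit_plus E (fun _ => B / K)); auto. exact (limit_free (fun _ => B / K) in01 x x).
      apply limit_exp_neg.
    - intros x Hx. unfold F, F'.
      apply dpl_l with ((E' x + 0) * exp (- K * x) + (E x + B / K) * (exp (- K * x) * (- K * 1))).
      field. lra.
      apply (derivable_pt_lim_mult (fun y => E y + B / K) (fun y => exp (- K * y))).
      apply (derivable_pt_lim_plus E (fun _ => B / K)). auto. apply derivable_pt_lim_const.
      apply (derivable_pt_lim_comp (fun y => - K * y) exp).
      apply (derivable_pt_lim_scal (fun y => y)). apply derivable_pt_lim_id.
      apply derivable_pt_lim_exp.
    - intros x Hx. unfold F'. specialize (Hb x Hx). pose proof (exp_pos (- K * x)). nra. }
  unfold F in HF. rewrite Rmult_0_r, exp_0, Rmult_1_r in HF.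
  assert (Hm : exp (- K * t) * exp (K * t) = 1).
  { rewrite <- exp_plus. replace (- K * t + K * t) with 0 by ring. apply exp_0. }
  pose proof (exp_pos (K * t)). 
  assert (E t + B / K <= (E 0 + B / K) * exp (K * t)).
  { replace (E t + B / K) with ((E t + B / K) * exp (- K * t) * exp (K * t)) by (rewrite Rmult_assoc, Hm; ring).
    apply Rmult_le_compat_r; lra. }
  lra.
Qed.


Lemma contw_mul f g x : limit1_in f in01 (f x) x -> limit1_in g in01 (g x) x ->
  limit1_in (fun t => f t * g t) in01 (f x * g x) x.
Proof. intros; apply (limit_mul f g); auto. Qed.
Lemma contw_plus f g x : limit1_in f in01 (f x) x -> limit1_in g in01 (g x) x ->
  limit1_in (fun t => f t + g t) in01 (f x + g x) x.
Proof. intros; apply (limit_plus f g); auto. Qed.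
Lemma contw_const c x : limit1_in (fun _ => c) in01 c x.
Proof. exact (limit_free (fun _ => c) in01 x x). Qed.

Lemma two_ab a b : 2 * Rabs (a * b) <= a * a + b * b.
Proof. rewrite Rabs_mult. pose proof (Rabs_pos a); pose proof (Rabs_pos b).
  assert (Ha : Rabs a * Rabs a = a * a) by (rewrite <- Rabs_mult; apply Rabs_right; nra).
  assert (Hb : Rabs b * Rabs b = b * b) by (rewrite <- Rabs_mult; apply Rabs_right; nra).
  pose proof (pow2_ge_0 (Rabs a - Rabs b)). nra. Qed.

Lemma uniq_sol (lam : R) (Q y y1 y2 : R -> R) (M : R) :
  has_deriv_on01 y y1 -> has_deriv_on01 y1 y2 ->
  (forall t, in01 t -> y2 t + lam^2 * Q t * y t = 0) ->
  (forall t, in01 t -> Rabs (Q t) <= M) ->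
  y 0 = 0 -> y1 0 = 0 -> forall t, in01 t -> y t = 0.
Proof.
  intros H1 H2 Heq HQ Hy0 Hy10 t Ht.
  assert (HM : 0 <= M) by (pose proof (HQ 0 ltac:(unfold in01; lra)); pose proof (Rabs_pos (Q 0)); lra).
  set (K := 1 + lam^2 * M).
  assert (HK : 0 < K) by (unfold K; pose proof (pow2_ge_0 lam); nra).
  pose proof (gronwall (fun t => y1 t * y1 t + y t * y t)
     (fun t => (y2 t * y1 t + y1 t * y2 t) + (y1 t * y t + y t * y1 t)) K 0 HK) as G.
  assert (A1 : forall x, in01 x -> limit1_in (fun t => y1 t * y1 t + y t * y t) in01 (y1 x * y1 x + y x * y x) x).
  { intros x Hx. pose proof (contw_of_has_deriv _ _ _ H1 Hx). pose proof (contw_of_has_deriv _ _ _ H2 Hx).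
    apply (contw_plus (fun t => y1 t * y1 t) (fun t => y t * y t)); [apply (contw_mul y1 y1)|apply (contw_mul y y)]; auto. }
  assert (A2 : forall x, 0 < x < 1 -> derivable_pt_lim (fun t => y1 t * y1 t + y t * y t) x
     ((y2 x * y1 x + y1 x * y2 x) + (y1 x * y x + y x * y1 x))).
  { intros x Hx. apply (derivable_pt_lim_plus (fun t => y1 t * y1 t) (fun t => y t * y t));
      apply (derivable_pt_lim_mult); first [apply (has_deriv_int _ _ _ H1 Hx) | apply (has_deriv_int _ _ _ H2 Hx)]. }
  assert (A3 : forall x, 0 < x < 1 -> (y2 x * y1 x + y1 x * y2 x) + (y1 x * y x + y x * y1 x) <= K * (y1 x * y1 x + y x * y x) + 0).
  { intros x Hx. assert (Hx' : in01 x) by (unfold in01; lra).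
      specialize (Heq x Hx'). specialize (HQ x Hx').
      replace (y2 x) with (- (lam^2 * Q x * y x)) by lra.
      replace (- (lam ^ 2 * Q x * y x) * y1 x + y1 x * - (lam ^ 2 * Q x * y x) + (y1 x * y x + y x * y1 x))
        with (2 * (y1 x * y x) * (1 - lam^2 * Q x)) by ring.
      assert (Hc : Rabs (1 - lam^2 * Q x) <= K).
      { unfold K. eapply Rle_trans. apply Rabs_triang. rewrite Rabs_R1, Rabs_Ropp, Rabs_mult.
        rewrite (Rabs_right (lam^2)) by (apply Rle_ge, pow2_ge_0). pose proof (pow2_ge_0 lam). nra. }
      pose proof (two_ab (y1 x) (y x)).
      eapply Rle_trans. apply Rle_abs. rewrite !Rabs_mult, (Rabs_right 2) by lra.
      pose proof (Rabs_pos (y1 x * y x)). pose proof (Rabs_pos (1 - lam ^ 2 * Q x)).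
      rewrite <- Rabs_mult. nra. }
  pose proof (G A1 A2 A3 t Ht) as Hle. cbv beta in Hle.
  rewrite Hy0, Hy10 in Hle. unfold Rdiv in Hle. rewrite Rmult_0_l in Hle.
  replace ((0 * 0 + 0 * 0 + 0) * exp (K * t) - 0) with 0 in Hle by ring.
  nra.
Qed.

Lemma sol_lin lam Q f g a b : is_solution01 lam Q f -> is_solution01 lam Q g ->
  is_solution01 lam Q (fun t => a * f t + b * g t).
Proof.
  intros [f1 [f2 [Hf1 [Hf2 Hf]]]] [g1 [g2 [Hg1 [Hg2 Hg]]]].
  exists (fun t => a * f1 t + b * g1 t), (fun t => a * f2 t + b * g2 t).
  split; [apply has_deriv_lin; auto|]. split; [apply has_deriv_lin; auto|].
  intros t Ht. specialize (Hf t Ht). specialize (Hg t Ht).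
  replace (a * f2 t + b * g2 t + lam ^ 2 * Q t * (a * f t + b * g t))
    with (a * (f2 t + lam ^ 2 * Q t * f t) + b * (g2 t + lam ^ 2 * Q t * g t)) by ring.
  rewrite Hf, Hg; ring.
Qed.


Lemma cont_conv h x : continuity_pt h x -> continuous h x.
Proof. intros H. apply continuity_pt_filterlim. auto. Qed.

Lemma exRInt_c h a b : (forall x, continuity_pt h x) -> ex_RInt h a b.
Proof. intros H. apply (ex_RInt_continuous (V:=R_CompleteNormedModule)). intros; apply cont_conv; auto. Qed.

Lemma RInt_der h : (forall x, continuity_pt h x) -> forall t, derivable_pt_lim (fun r => RInt h 0 r) t (h t).
Proof.
  intros H t. apply is_derive_Reals. apply (is_derive_RInt (V:=R_CompleteNormedModule) h (fun r => RInt h 0 r) 0 t).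
  - apply filter_forall. intros x. apply (RInt_correct (V:=R_CompleteNormedModule)). apply exRInt_c; auto.
  - apply cont_conv; auto.
Qed.

Lemma RInt_cont h : (forall x, continuity_pt h x) -> forall t, continuity_pt (fun r => RInt h 0 r) t.
Proof. intros H t. apply derivable_continuous_pt. exists (h t). apply RInt_der; auto. Qed.

Lemma RInt_abs_bound h phi t : 0 <= t -> (forall x, continuity_pt h x) -> (forall x, continuity_pt phi x) ->
  (forall s, 0 <= s <= t -> Rabs (h s) <= phi s) -> Rabs (RInt h 0 t) <= RInt phi 0 t.
Proof.
  intros Ht Hh Hp Hb. apply Rabs_le. split.
  - assert (RInt (fun x => opp (phi x)) 0 t <= RInt h 0 t).
    { apply RInt_le; auto. apply (ex_RInt_opp (V:=R_CompleteNormedModule)). apply exRInt_c; auto. apply exRInt_c; auto.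
      intros x Hx. specialize (Hb x ltac:(lra)). apply Rabs_le_inv' in Hb. unfold opp; simpl. lra. }
    rewrite (RInt_opp (V:=R_CompleteNormedModule)) in H by (apply exRInt_c; auto). unfold opp in H; simpl in H. lra.
  - apply RInt_le; auto. apply exRInt_c; auto. apply exRInt_c; auto.
    intros x Hx. specialize (Hb x ltac:(lra)). apply Rabs_le_inv' in Hb. lra.
Qed.

Lemma exp_lin_der K c x : derivable_pt_lim (fun s => c * exp (K * s)) x (c * (exp (K * x) * (K * 1))).
Proof.
  apply (derivable_pt_lim_scal (fun s => exp (K * s))).
  apply (derivable_pt_lim_comp (fun s => K * s) exp).
  apply (derivable_pt_lim_scal (fun y => y)). apply derivable_pt_lim_id. apply derivable_pt_lim_exp.
Qed.

Lemma exp_lin_cont K c x : continuity_pt (fun s => c * exp (K * s)) x.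
Proof. apply derivable_continuous_pt. eexists. apply exp_lin_der. Qed.

Lemma RInt_exp K c t : 0 < K -> RInt (fun s => c * exp (K * s)) 0 t = c / K * (exp (K * t) - 1).
Proof.
  intros HK. apply (is_RInt_unique (V:=R_CompleteNormedModule)).
  replace (c / K * (exp (K * t) - 1)) with (minus ((c / K) * exp (K * t)) ((c / K) * exp (K * 0))).
  2:{ rewrite Rmult_0_r, exp_0. unfold minus, plus, opp; simpl. ring. }
  apply (is_RInt_derive (V:=R_CompleteNormedModule) (fun s => (c / K) * exp (K * s))).
  - intros x _. apply is_derive_Reals. eapply dpl_l. 2: apply exp_lin_der. field. lra.
  - intros x _. apply cont_conv. apply exp_lin_cont.
Qed.

Lemma small_pow (x A : R) : 0 <= A -> (forall n, x <= A * (1/4)^n) -> x <= 0.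
Proof.
  intros HA H. destruct (Rle_or_lt x 0) as [|Hx]; auto. exfalso.
  destruct (pow_lt_1_zero (1/4) ltac:(rewrite Rabs_right; lra) (x / (A + 1))) as [N HN].
  apply Rdiv_lt_0_compat; lra.
  specialize (HN N (le_n N)). specialize (H N).
  rewrite Rabs_right in HN by (apply Rle_ge, pow_le; lra).
  assert (0 <= (1/4)^N) by (apply pow_le; lra).
  assert (x / (A + 1) * (A + 1) = x) by (field; lra).
  nra.
Qed.

Lemma pow_quarter_mono n m : (n <= m)%nat -> (1/4)^m <= (1/4)^n.
Proof.
  intros H. replace m with (n + (m - n))%nat by lia. rewrite pow_add.
  assert (0 <= (1/4)^n) by (apply pow_le; lra).
  assert ((1/4)^(m-n) <= 1) by (clear; induction (m-n)%nat; simpl; [lra|]; assert (0 <= (1/4)^n0) by (apply pow_le; lra); nra). 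
  assert (0 <= (1/4)^(m-n)) by (apply pow_le; lra). nra.
Qed.


Definition Ig (G : R -> R -> R) (f : R -> R) (s : R) : R := G s (f (clamp s)).
Definition Jf (G : R -> R -> R) (f : R -> R) (r : R) : R := RInt (Ig G f) 0 r.
Definition Pf (G : R -> R -> R) (a b : R) (f : R -> R) (t : R) : R := a + b * t + RInt (Jf G f) 0 t.

Definition Lip (G : R -> R -> R) (L : R) := forall s x y, Rabs (G s x - G s y) <= L * Rabs (x - y).
Definition Cs (G : R -> R -> R) := forall x s0, continuity_pt (fun s => G s x) s0.
Definition cc (f : R -> R) := forall t, continuity_pt (fun s => f (clamp s)) t.

Lemma cc_of_cont f : (forall t, continuity_pt f t) -> cc f.
Proof. intros H t. apply (continuity_pt_comp clamp f). apply clamp_cont. apply H. Qed.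

Lemma Ig_cont G L f : 0 <= L -> Lip G L -> Cs G -> cc f -> forall s, continuity_pt (Ig G f) s.
Proof.
  intros HL0 HL HC Hf s0. apply cont_iff. intros eps He.
  destruct (proj1 (cont_iff _ _) (HC (f (clamp s0)) s0) (eps/2) ltac:(lra)) as [a1 [Ha1 H1]].
  destruct (proj1 (cont_iff _ _) (Hf s0) (eps/2/(L+1)) ltac:(apply Rdiv_lt_0_compat; lra)) as [a2 [Ha2 H2]].
  exists (Rmin a1 a2). split. apply Rmin_pos; auto.
  intros y Hy. pose proof (Rmin_l a1 a2). pose proof (Rmin_r a1 a2).
  unfold Ig. specialize (H1 y ltac:(lra)). specialize (H2 y ltac:(lra)). simpl in *.
  replace (G y (f (clamp y)) - G s0 (f (clamp s0))) with
    ((G y (f (clamp y)) - G y (f (clamp s0))) + (G y (f (clamp s0)) - G s0 (f (clamp s0)))) by ring.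
  eapply Rle_lt_trans. apply Rabs_triang.
  assert (Rabs (G y (f (clamp y)) - G y (f (clamp s0))) < eps/2).
  { eapply Rle_lt_trans. apply HL.
    apply Rle_lt_trans with ((L+1) * Rabs (f (clamp y) - f (clamp s0))).
    apply Rmult_le_compat_r. apply Rabs_pos. lra.
    replace (eps/2) with ((L+1) * (eps/2/(L+1))) by (field; lra).
    apply Rmult_lt_compat_l; lra. }
  lra.
Qed.

Lemma J_der G L f : 0 <= L -> Lip G L -> Cs G -> cc f -> forall r, derivable_pt_lim (Jf G f) r (Ig G f r).
Proof. intros. unfold Jf. apply RInt_der. apply (Ig_cont G L); auto. Qed.

Lemma J_cont G L f : 0 <= L -> Lip G L -> Cs G -> cc f -> forall r, continuity_pt (Jf G f) r.
Proof. intros. unfold Jf. apply RInt_cont. apply (Ig_cont G L); auto. Qed.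

Lemma P_der G L a b f : 0 <= L -> Lip G L -> Cs G -> cc f -> forall t, derivable_pt_lim (Pf G a b f) t (b + Jf G f t).
Proof.
  intros. unfold Pf.
  apply dpl_l with (0 + b * 1 + Jf G f t). ring.
  apply (derivable_pt_lim_plus (fun t => a + b * t) (fun t => RInt (Jf G f) 0 t)).
  apply (derivable_pt_lim_plus (fun _ => a) (fun t => b * t)). apply derivable_pt_lim_const.
  apply (derivable_pt_lim_scal (fun t => t)). apply derivable_pt_lim_id.
  apply RInt_der. apply (J_cont G L); auto.
Qed.

Lemma P_cont G L a b f : 0 <= L -> Lip G L -> Cs G -> cc f -> forall t, continuity_pt (Pf G a b f) t.
Proof. intros. apply derivable_continuous_pt. eexists. apply (P_der G L); auto. Qed.

Lemma P_diff G L a b f g K D : 0 <= L -> Lip G L -> Cs G -> cc f -> cc g -> 0 < K -> 0 <= D ->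
  (forall s, in01 s -> Rabs (f s - g s) <= D * exp (K * s)) ->
  forall t, in01 t -> Rabs (Pf G a b f t - Pf G a b g t) <= L * D / (K * K) * exp (K * t).
Proof.
  intros HL0 HL HC Hf Hg HK HD Hb t Ht.
  assert (HJ : forall r, in01 r -> Rabs (Jf G f r - Jf G g r) <= L * D / K * exp (K * r)).
  { intros r Hr. unfold Jf. rewrite <- (RInt_minus (V:=R_CompleteNormedModule)) by (apply exRInt_c; apply (Ig_cont G L); auto).
    eapply Rle_trans. apply (RInt_abs_bound _ (fun s => (L * D) * exp (K * s))).
    - destruct Hr; lra.
    - intros x. apply continuity_pt_minus; apply (Ig_cont G L); auto.
    - intros; apply exp_lin_cont.
    - intros s Hs. unfold Ig, minus, plus, opp; simpl. eapply Rle_trans. apply HL.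
      rewrite clamp_id by (unfold in01 in *; lra). rewrite Rmult_assoc. apply Rmult_le_compat_l; auto.
      apply Hb. unfold in01 in *; lra.
    - rewrite RInt_exp by auto. pose proof (exp_pos (K * r)).
      assert (0 <= L * D) by nra. 
      assert (L * D / K * (exp (K * r) - 1) <= L * D / K * exp (K * r)).
      { apply Rmult_le_compat_l. apply Rmult_le_pos; auto. left; apply Rinv_0_lt_compat; auto. lra. }
      lra. }
  unfold Pf.
  replace (a + b * t + RInt (Jf G f) 0 t - (a + b * t + RInt (Jf G g) 0 t)) with
     (RInt (Jf G f) 0 t - RInt (Jf G g) 0 t) by ring.
  rewrite <- (RInt_minus (V:=R_CompleteNormedModule)) by (apply exRInt_c; apply (J_cont G L); auto).
  eapply Rle_trans. apply (RInt_abs_bound _ (fun s => (L * D / K) * exp (K * s))).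
  - destruct Ht; lra.
  - intros x. apply continuity_pt_minus; apply (J_cont G L); auto.
  - intros; apply exp_lin_cont.
  - intros s Hs. apply HJ. unfold in01 in *; lra.
  - rewrite RInt_exp by auto. pose proof (exp_pos (K * t)).
    assert (0 <= L * D / K) by (apply Rmult_le_pos; [nra| left; apply Rinv_0_lt_compat; auto]).
    replace (L * D / (K * K)) with (L * D / K / K) by (field; lra).
    apply Rmult_le_compat_l. apply Rmult_le_pos; auto. left; apply Rinv_0_lt_compat; auto. lra.
Qed.


Fixpoint fseq (G : R -> R -> R) (a b : R) (n : nat) : R -> R :=
  match n with O => fun _ => a | S n => Pf G a b (fseq G a b n) end.

Lemma fseq_cont G L a b : 0 <= L -> Lip G L -> Cs G -> forall n t, continuity_pt (fseq G a b n) t.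
Proof.
  intros HL0 HL HC n. induction n; intros t; simpl.
  - apply (cont_of_lip _ _ 0); [lra|]. intros; replace (a - a) with 0 by ring. rewrite Rabs_R0; nra.
  - apply (P_cont G L); auto. apply cc_of_cont; auto.
Qed.

Lemma picard (G : R -> R -> R) (L a b : R) :
  0 <= L -> Lip G L -> Cs G ->
  exists W W1 H : R -> R,
    (forall t, derivable_pt_lim W t (W1 t)) /\ (forall t, derivable_pt_lim W1 t (H t)) /\
    (forall t, continuity_pt H t) /\ W 0 = a /\ W1 0 = b /\
    (forall t, in01 t -> H t = G t (W t)).
Proof.
  intros HL0 HL HC.
  set (K := 1 + 2 * L).
  assert (HK : 0 < K) by (unfold K; lra).
  assert (HK4 : L / (K * K) <= 1/4).
  { unfold K. apply Rmult_le_reg_r with ((1 + 2 * L) * (1 + 2 * L)). nra.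
    field_simplify; [|nra]. nra. }
  set (f := fseq G a b).
  assert (Hfc : forall n t, continuity_pt (f n) t) by (apply (fseq_cont G L); auto).
  destruct (continuity_ab_maj (fun s => Rabs (f 1%nat s - f 0%nat s)) 0 1 ltac:(lra)) as [Mx [HMx1 HMx2]].
  { intros c _. apply continuity_pt_comp with (f2 := Rabs). apply continuity_pt_minus; auto. apply Rcontinuity_abs. }
  set (D0 := Rabs (f 1%nat Mx - f 0%nat Mx)).
  assert (HD0 : 0 <= D0) by apply Rabs_pos.
  assert (Hstep : forall n s, in01 s -> Rabs (f (S n) s - f n s) <= D0 * (1/4)^n * exp (K * s)).
  { induction n; intros s Hs.
    - simpl pow. rewrite Rmult_1_r. specialize (HMx1 s Hs). cbv beta in HMx1. fold D0 in HMx1.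
      pose proof (exp_ineq1_le (K * s)). destruct Hs.
      assert (0 <= K * s) by nra. nra.
    - change (f (S (S n)) s) with (Pf G a b (f (S n)) s). change (f (S n) s) with (Pf G a b (f n) s).
      eapply Rle_trans. apply (P_diff G L a b (f (S n)) (f n) K (D0 * (1/4)^n)); auto.
      apply cc_of_cont; apply Hfc. apply cc_of_cont; apply Hfc.
      apply Rmult_le_pos; auto; apply pow_le; lra.
      assert (0 <= D0 * (1/4)^n) by (apply Rmult_le_pos; auto; apply pow_le; lra).
      pose proof (exp_pos (K * s)). simpl pow.
      replace (L * (D0 * (1 / 4) ^ n) / (K * K)) with ((L / (K * K)) * (D0 * (1 / 4) ^ n)) by (field; lra).
      assert (0 <= L / (K * K)) by (apply Rmult_le_pos; auto; left; apply Rinv_0_lt_compat; nra).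
      replace (D0 * (1 / 4 * (1 / 4) ^ n) * exp (K * s)) with (1/4 * (D0 * (1 / 4) ^ n) * exp (K * s)) by ring.
      apply Rmult_le_compat_r; [lra|]. apply Rmult_le_compat_r; auto. }
  set (C := D0 * exp K).
  assert (HC0 : 0 <= C) by (unfold C; pose proof (exp_pos K); nra).
  assert (Hstep2 : forall n s, in01 s -> Rabs (f (S n) s - f n s) <= C * (1/4)^n).
  { intros n s Hs. eapply Rle_trans. apply Hstep; auto. unfold C.
    assert (exp (K * s) <= exp K) by (apply exp_le; destruct Hs; nra).
    assert (0 <= D0 * (1/4)^n) by (apply Rmult_le_pos; auto; apply pow_le; lra). nra. }
  assert (Hcau : forall n k s, in01 s -> Rabs (f (n + k)%nat s - f n s) <= 4/3 * C * ((1/4)^n - (1/4)^(n+k))).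
  { intros n k s Hs. induction k.
    - rewrite Nat.add_0_r. replace (f n s - f n s) with 0 by ring. rewrite Rabs_R0. nra.
    - replace (n + S k)%nat with (S (n + k)) by lia.
      replace (f (S (n + k)) s - f n s) with ((f (S (n + k)) s - f (n + k)%nat s) + (f (n + k)%nat s - f n s)) by ring.
      eapply Rle_trans. apply Rabs_triang. pose proof (Hstep2 (n + k)%nat s Hs).
      simpl pow. nra. }
  assert (Hcau2 : forall n m s, (n <= m)%nat -> in01 s -> Rabs (f m s - f n s) <= 4/3 * C * (1/4)^n).
  { intros n m s Hnm Hs. replace m with (n + (m - n))%nat by lia. eapply Rle_trans. apply Hcau; auto.
    assert (0 <= (1/4)^(n + (m-n))) by (apply pow_le; lra). nra. }
  assert (Hsmall : forall eps, 0 < eps -> exists N, 4/3 * C * (1/4)^N < eps).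
  { intros eps He. destruct (pow_lt_1_zero (1/4) ltac:(rewrite Rabs_right; lra) (eps / (4/3 * C + 1))) as [N HN].
    apply Rdiv_lt_0_compat; lra. exists N. specialize (HN N (le_n N)).
    rewrite Rabs_right in HN by (apply Rle_ge, pow_le; lra).
    assert (eps / (4/3 * C + 1) * (4/3 * C + 1) = eps) by (field; lra).
    assert (0 <= (1/4)^N) by (apply pow_le; lra). nra. }
  assert (Hlim : forall s, in01 s -> is_lim_seq (fun n => f n s) (real (Lim_seq (fun n => f n s)))).
  { intros s Hs.
    assert (Hex : ex_finite_lim_seq (fun n => f n s)).
    { apply ex_lim_seq_cauchy_corr. intros eps. destruct (Hsmall eps (cond_pos eps)) as [N HN].
      exists N. intros n m Hn Hm. destruct (Nat.le_ge_cases n m) as [Hnm|Hnm].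
      - rewrite Rabs_minus_sym. eapply Rle_lt_trans. apply Hcau2; auto.
        eapply Rle_lt_trans; [|apply HN]. pose proof (pow_quarter_mono N n Hn). nra.
      - eapply Rle_lt_trans. apply Hcau2; auto.
        eapply Rle_lt_trans; [|apply HN]. pose proof (pow_quarter_mono N m Hm). nra. }
    destruct Hex as [l Hl]. rewrite (is_lim_seq_unique _ _ Hl). simpl. auto. }
  set (F := fun s => real (Lim_seq (fun n => f n s))).
  assert (HFb : forall n s, in01 s -> Rabs (f n s - F s) <= 4/3 * C * (1/4)^n).
  { intros n s Hs. apply Rle_plus_epsilon. intros eps He.
    pose proof (proj1 (is_lim_seq_Reals _ _) (Hlim s Hs) eps He) as [N HN].
    specialize (HN (max N n) ltac:(lia)). unfold Rdist in HN.
    specialize (Hcau2 n (max N n) s ltac:(lia) Hs).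
    replace (f n s - F s) with ((f n s - f (max N n) s) + (f (max N n) s - F s)) by ring.
    eapply Rle_trans. apply Rabs_triang. rewrite Rabs_minus_sym. unfold F. lra. }
  assert (HFc : cc F).
  { intros t0. apply cont_iff. intros eps He.
    destruct (Hsmall (eps/3) ltac:(lra)) as [N HN].
    destruct (proj1 (cont_iff _ _) (cc_of_cont _ (Hfc N) t0) (eps/3) ltac:(lra)) as [d [Hd Hd']].
    exists d. split; auto. intros y Hy. specialize (Hd' y Hy). simpl in Hd'.
    pose proof (HFb N (clamp y) (clamp_in01 y)). pose proof (HFb N (clamp t0) (clamp_in01 t0)).
    replace (F (clamp y) - F (clamp t0)) with
      ((F (clamp y) - f N (clamp y)) + (f N (clamp y) - f N (clamp t0)) + (f N (clamp t0) - F (clamp t0))) by ring.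
    eapply Rle_lt_trans. apply Rabs_triang. eapply Rle_lt_trans. apply Rplus_le_compat_r. apply Rabs_triang.
    rewrite (Rabs_minus_sym (F (clamp y))). lra. }
  assert (Hfix : forall t, in01 t -> Pf G a b F t = F t).
  { intros t Ht.
    assert (Habs : Rabs (Pf G a b F t - F t) <= 0).
    { apply (small_pow _ (4/3 * C * (1/4 * exp K + 1/4))). pose proof (exp_pos K). nra.
      intros n.
      replace (Pf G a b F t - F t) with ((Pf G a b F t - Pf G a b (f n) t) + (f (S n) t - F t)) by (change (f (S n) t) with (Pf G a b (f n) t); ring).
      eapply Rle_trans. apply Rabs_triang.
      assert (H1 : Rabs (Pf G a b F t - Pf G a b (f n) t) <= L * (4/3 * C * (1/4)^n) / (K * K) * exp (K * t)).
      { apply (P_diff G L); auto. apply cc_of_cont; apply Hfc.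
        assert (0 <= (1/4)^n) by (apply pow_le; lra). nra.
        intros s Hs. rewrite Rabs_minus_sym. eapply Rle_trans. apply HFb; auto.
        pose proof (exp_ineq1_le (K * s)). destruct Hs. assert (0 <= (1/4)^n) by (apply pow_le; lra).
        assert (0 <= K * s) by nra. assert (0 <= 4/3 * C * (1/4)^n) by nra. nra. }
      pose proof (HFb (S n) t Ht). simpl pow in H.
      assert (exp (K * t) <= exp K) by (apply exp_le; destruct Ht; nra).
      assert (0 <= (1/4)^n) by (apply pow_le; lra).
      assert (0 <= 4/3 * C * (1/4)^n) by nra.
      replace (L * (4 / 3 * C * (1 / 4) ^ n) / (K * K)) with ((L / (K * K)) * (4 / 3 * C * (1 / 4) ^ n)) in H1 by (field; lra).
      assert (0 <= L / (K * K)) by (apply Rmult_le_pos; auto; left; apply Rinv_0_lt_compat; nra).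
      assert (0 <= exp (K * t)) by (left; apply exp_pos).
      assert ((L / (K * K)) * (4 / 3 * C * (1 / 4) ^ n) * exp (K * t) <= 1/4 * (4 / 3 * C * (1 / 4) ^ n) * exp K).
      { apply Rmult_le_compat; try nra. }
      nra. }
    pose proof (Rabs_pos (Pf G a b F t - F t)). 
    assert (Rabs (Pf G a b F t - F t) = 0) by lra.
    apply Rabs_eq_0 in H0. lra. }
  exists (Pf G a b F), (fun t => b + Jf G F t), (Ig G F).
  split; [|split; [|split; [|split; [|split]]]].
  - apply (P_der G L); auto.
  - intros t. apply dpl_l with (0 + Ig G F t). ring.
    apply (derivable_pt_lim_plus (fun _ => b) (Jf G F)). apply derivable_pt_lim_const.
    apply (J_der G L); auto.
  - apply (Ig_cont G L); auto.
  - unfold Pf. rewrite RInt_point. unfold zero; simpl. ring.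
  - unfold Jf. rewrite RInt_point. unfold zero; simpl. ring.
  - intros t Ht. unfold Ig. rewrite clamp_id by auto. rewrite Hfix; auto.
Qed.


Definition w0f (q : R -> R) (t : R) := exp (-(1/4) * ln (q t)).
Definition w0d (q q1 : R -> R) (t : R) := -(1/4) * w0f q t * (q1 t / q t).
Definition w0dd (q q1 q2 : R -> R) (t : R) :=
  -(1/4) * (w0d q q1 t * (q1 t / q t) + w0f q t * ((q2 t * q t - q1 t * q1 t) / (q t)^2)).

Lemma w0f_pos q t : 0 < w0f q t.
Proof. apply exp_pos. Qed.

Lemma w0f_pow4 q t : 0 < q t -> w0f q t ^ 4 = / q t.
Proof.
  intros H. unfold w0f. set (a := -(1/4) * ln (q t)).
  replace (exp a ^ 4) with (exp a * exp a * exp a * exp a) by ring.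
  rewrite <- !exp_plus. replace (a + a + a + a) with (- ln (q t)) by (unfold a; lra).
  rewrite exp_Ropp, exp_ln; auto.
Qed.

Lemma w0_der q q1 x : 0 < q x -> derivable_pt_lim q x (q1 x) -> derivable_pt_lim (w0f q) x (w0d q q1 x).
Proof.
  intros Hp Hd. unfold w0d, w0f.
  apply dpl_l with (exp (-(1/4) * ln (q x)) * (-(1/4) * (/ q x * q1 x))).
  field. lra.
  apply (derivable_pt_lim_comp (fun t => -(1/4) * ln (q t)) exp).
  2: apply derivable_pt_lim_exp.
  apply (derivable_pt_lim_scal (fun t => ln (q t))).
  apply (derivable_pt_lim_comp q ln); auto. apply derivable_pt_lim_ln; auto.
Qed.

Lemma w0d_der q q1 q2 x : 0 < q x -> derivable_pt_lim q x (q1 x) -> derivable_pt_lim q1 x (q2 x) ->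
  derivable_pt_lim (w0d q q1) x (w0dd q q1 q2 x).
Proof.
  intros Hp Hd Hd2. unfold w0dd, w0d.
  apply dpl_l with (-(1/4) * (w0d q q1 x * (q1 x / q x) + w0f q x * ((q2 x * q x - q1 x * q1 x) / (q x)^2))).
  unfold w0d; ring.
  apply dpl_ext with (fun t => -(1/4) * (w0f q t * (q1 t / q t))). intros; ring.
  apply (derivable_pt_lim_scal (fun t => w0f q t * (q1 t / q t))).
  apply (derivable_pt_lim_mult (w0f q) (fun t => q1 t / q t)). apply w0_der; auto.
  apply dpl_l with ((q2 x * q x - q1 x * q1 x) / (q x)²). unfold Rsqr; field; lra.
  apply (derivable_pt_lim_div q1 q); auto. lra.
Qed.

Lemma w0_ode q q1 q2 t : 0 < q t -> 4 * w0f q t ^ 3 * w0dd q q1 q2 t = p_of q q1 q2 t.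
Proof.
  intros H. assert (H4 := w0f_pow4 q t H).
  replace (4 * w0f q t ^ 3 * w0dd q q1 q2 t) with
    (w0f q t ^ 4 * (-(1/4) * (-(1/4) * (q1 t / q t) * (q1 t / q t) + ((q2 t * q t - q1 t * q1 t) / (q t)^2)) * 4))
    by (unfold w0dd, w0d; ring).
  rewrite H4. unfold p_of. field. lra.
Qed.

Lemma pow4_mono x y : 0 < x -> 0 < y -> x ^ 4 <= y ^ 4 -> x <= y.
Proof.
  intros Hx Hy H. destruct (Rle_or_lt x y) as [|Hl]; auto. exfalso.
  assert (y^2 < x^2) by nra. assert (y^4 < x^4).
  { replace (y^4) with (y^2*y^2) by ring. replace (x^4) with (x^2*x^2) by ring.
    assert (0 < y^2) by nra. nra. }
  lra.
Qed.

Lemma inv3_lip m X Y : 0 < m -> m <= X -> m <= Y ->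
  Rabs (/ (4 * X^3) - / (4 * Y^3)) <= 3 / (4 * m^4) * Rabs (X - Y).
Proof.
  intros Hm HX HY.
  set (u := / X). set (v := / Y). set (M := / m).
  assert (Hu : 0 < u <= M). { unfold u, M. split. apply Rinv_0_lt_compat; lra. apply Rinv_le_contravar; lra. }
  assert (Hv : 0 < v <= M). { unfold v, M. split. apply Rinv_0_lt_compat; lra. apply Rinv_le_contravar; lra. }
  replace (/ (4 * X^3) - / (4 * Y^3)) with (/4 * (u - v) * (u*u + u*v + v*v)) by (unfold u, v; field; lra).
  replace (u - v) with ((Y - X) * u * v) by (unfold u, v; field; lra).
  replace (3 / (4 * m^4)) with (3/4 * M^4) by (unfold M; field; lra).
  rewrite !Rabs_mult. rewrite (Rabs_right (/4)) by lra. rewrite (Rabs_right u) by lra. rewrite (Rabs_right v) by lra.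
  rewrite (Rabs_right (u*u + u*v + v*v)) by nra. rewrite Rabs_minus_sym.
  assert (0 <= Rabs (X - Y)) by apply Rabs_pos.
  assert (u * v <= M * M) by nra.
  assert (u*u + u*v + v*v <= 3 * (M * M)) by nra.
  assert (0 <= u * v) by nra.
  assert (u * v * (u*u + u*v + v*v) <= M * M * (3 * (M * M))) by (apply Rmult_le_compat; nra).
  nra.
Qed.

Lemma inv4_lip m X Y : 0 < m -> m <= X -> m <= Y ->
  Rabs (/ X^4 - / Y^4) <= 4 / m^5 * Rabs (X - Y).
Proof.
  intros Hm HX HY.
  set (u := / X). set (v := / Y). set (M := / m).
  assert (Hu : 0 < u <= M). { unfold u, M. split. apply Rinv_0_lt_compat; lra. apply Rinv_le_contravar; lra. }
  assert (Hv : 0 < v <= M). { unfold v, M. split. apply Rinv_0_lt_compat; lra. apply Rinv_le_contravar; lra. }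
  replace (/ X^4 - / Y^4) with ((u - v) * (u*u*u + u*u*v + u*v*v + v*v*v)) by (unfold u, v; field; lra).
  replace (u - v) with ((Y - X) * u * v) by (unfold u, v; field; lra).
  replace (4 / m^5) with (4 * M^5) by (unfold M; field; lra).
  rewrite !Rabs_mult. rewrite (Rabs_right u) by lra. rewrite (Rabs_right v) by lra.
  rewrite (Rabs_right (u*u*u + u*u*v + u*v*v + v*v*v)) by nra. rewrite Rabs_minus_sym.
  assert (0 <= Rabs (X - Y)) by apply Rabs_pos.
  assert (u * v <= M * M) by nra.
  assert (u*u <= M*M) by nra. assert (v*v <= M*M) by nra.
  assert (u*u*u + u*u*v + u*v*v + v*v*v <= 4 * (M * M * M)) by nra.
  assert (0 <= u * v) by nra.
  assert (u * v * (u*u*u + u*u*v + u*v*v + v*v*v) <= M * M * (4 * (M * M * M))) by (apply Rmult_le_compat; nra).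
  nra.
Qed.


Lemma dpl_pow_comp W W1 x n : derivable_pt_lim W x (W1 x) ->
  derivable_pt_lim (fun t => W t ^ n) x (INR n * W x ^ pred n * W1 x).
Proof.
  intros H. apply (derivable_pt_lim_comp W (fun y => y ^ n)); auto. apply derivable_pt_lim_pow.
Qed.

Lemma qb_derivs W W1 H :
  (forall t, derivable_pt_lim W t (W1 t)) -> (forall t, derivable_pt_lim W1 t (H t)) ->
  (forall t, in01 t -> 0 < W t) ->
  has_deriv_on01 (fun t => / W t ^ 4) (fun t => -4 * W1 t / W t ^ 5) /\
  has_deriv_on01 (fun t => -4 * W1 t / W t ^ 5) (fun t => 20 * W1 t ^ 2 / W t ^ 6 - 4 * H t / W t ^ 5).
Proof.
  intros HW HW1 Hp. split; apply has_deriv_of; intros x Hx; specialize (Hp x Hx).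
  - apply dpl_l with ((0 * W x ^ 4 - (INR 4 * W x ^ pred 4 * W1 x) * 1) / (W x ^ 4)²).
    simpl INR; simpl pred. unfold Rsqr. field. lra.
    apply dpl_ext with (fun t => 1 / W t ^ 4). intros; unfold Rdiv; ring.
    apply (derivable_pt_lim_div (fun _ => 1) (fun t => W t ^ 4)). apply derivable_pt_lim_const. apply dpl_pow_comp; auto.
    apply pow_nonzero; lra.
  - apply dpl_l with (((-4 * H x) * W x ^ 5 - (INR 5 * W x ^ pred 5 * W1 x) * (-4 * W1 x)) / (W x ^ 5)²).
    simpl INR; simpl pred. unfold Rsqr. field. lra.
    apply (derivable_pt_lim_div (fun t => -4 * W1 t) (fun t => W t ^ 5)).
    apply (derivable_pt_lim_scal W1); auto. apply dpl_pow_comp; auto. apply pow_nonzero; lra.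
Qed.

Lemma qb_pof W W1 H pb t : 0 < W t -> H t = pb t / (4 * W t ^ 3) ->
  p_of (fun t => / W t ^ 4) (fun t => -4 * W1 t / W t ^ 5) (fun t => 20 * W1 t ^ 2 / W t ^ 6 - 4 * H t / W t ^ 5) t = pb t.
Proof.
  intros Hp HH. unfold p_of. rewrite HH. field. lra.
Qed.


Lemma abs_of_sq x y : 0 <= y -> x * x <= y * y -> Rabs x <= y.
Proof.
  intros Hy H. destruct (Rle_or_lt (Rabs x) y) as [|Hl]; auto. exfalso.
  assert (Rabs x * Rabs x = x * x) by (rewrite <- Rabs_mult; apply Rabs_right; nra). nra.
Qed.

Lemma est_lemma lam q qb qb1 u u1 u2 TU TU1 TU2 (eps Mu DQ2 eta' eta1b : R) :
  0 < lam -> has_deriv_on01 qb qb1 ->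
  (forall t, in01 t -> eta1b <= qb t) -> 0 < eta1b ->
  (forall t, in01 t -> Rabs (qb1 t) <= eta' * qb t) -> 0 <= eta' ->
  (forall t, in01 t -> (q t - qb t) * (q t - qb t) <= DQ2) ->
  lam^2 * DQ2 * exp (1 + eta') <= eps^2 * eta1b -> 0 <= eps ->
  has_deriv_on01 u u1 -> has_deriv_on01 u1 u2 -> (forall t, in01 t -> u2 t + lam^2 * qb t * u t = 0) ->
  (forall t, derivable_pt_lim TU t (TU1 t)) -> (forall t, derivable_pt_lim TU1 t (TU2 t)) ->
  (forall t, in01 t -> TU2 t = - lam^2 * q t * TU t) ->
  TU 0 = u 0 -> TU1 0 = u1 0 ->
  (forall t, in01 t -> Rabs (TU t) <= Mu) -> 0 <= Mu ->
  forall t, in01 t -> Rabs (u t - TU t) <= eps * Mu.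
Proof.
  intros Hlam Hqb Hqbl Heb Hqb1 Het HDQ Hfin Heps Hu Hu1 Hueq HT HT1 HTeq HT0 HT10 HMu HMu0 t Ht.
  set (K := 1 + eta').
  assert (HK : 0 < K) by (unfold K; lra).
  set (B := lam^4 * DQ2 * (Mu * Mu)).
  assert (HDQ0 : 0 <= DQ2) by (specialize (HDQ 0 ltac:(unfold in01; lra)); pose proof (Rle_0_sqr (q 0 - qb 0)); unfold Rsqr in *; lra).
  set (e := fun t => u t - TU t). set (e1 := fun t => u1 t - TU1 t).
  assert (A1 : forall x, in01 x -> limit1_in (fun t => e1 t * e1 t + lam^2 * qb t * (e t * e t)) in01
                  (e1 x * e1 x + lam^2 * qb x * (e x * e x)) x).
  { intros x Hx.
    assert (Ce : limit1_in e in01 (e x) x).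
    { apply (limit_minus u TU). apply (contw_of_has_deriv _ _ _ Hu Hx). apply limit_within_of_cont.
      apply derivable_continuous_pt. eexists; apply HT. }
    assert (Ce1 : limit1_in e1 in01 (e1 x) x).
    { apply (limit_minus u1 TU1). apply (contw_of_has_deriv _ _ _ Hu1 Hx). apply limit_within_of_cont.
      apply derivable_continuous_pt. eexists; apply HT1. }
    assert (Cq : limit1_in qb in01 (qb x) x) by apply (contw_of_has_deriv _ _ _ Hqb Hx).
    apply (contw_plus (fun t => e1 t * e1 t) (fun t => lam^2 * qb t * (e t * e t))).
    apply (contw_mul e1 e1); auto.
    apply (contw_mul (fun t => lam^2 * qb t) (fun t => e t * e t)).
    apply (contw_mul (fun _ => lam^2) qb); auto. apply contw_const.
    apply (contw_mul e e); auto. }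
  assert (A2 : forall x, 0 < x < 1 -> derivable_pt_lim (fun t => e1 t * e1 t + lam^2 * qb t * (e t * e t)) x
     ((u2 x - TU2 x) * e1 x + e1 x * (u2 x - TU2 x) +
      ((0 * qb x + lam^2 * qb1 x) * (e x * e x) + lam^2 * qb x * ((u1 x - TU1 x) * e x + e x * (u1 x - TU1 x))))).
  { intros x Hx.
    assert (De : derivable_pt_lim e x (u1 x - TU1 x)).
    { apply (derivable_pt_lim_minus u TU). apply (has_deriv_int _ _ _ Hu Hx). apply HT. }
    assert (De1 : derivable_pt_lim e1 x (u2 x - TU2 x)).
    { apply (derivable_pt_lim_minus u1 TU1). apply (has_deriv_int _ _ _ Hu1 Hx). apply HT1. }
    apply (derivable_pt_lim_plus (fun t => e1 t * e1 t) (fun t => lam^2 * qb t * (e t * e t))).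
    apply (derivable_pt_lim_mult e1 e1); auto.
    apply (derivable_pt_lim_mult (fun t => lam^2 * qb t) (fun t => e t * e t)).
    apply (derivable_pt_lim_mult (fun _ => lam^2) qb). apply derivable_pt_lim_const.
    apply (has_deriv_int _ _ _ Hqb Hx).
    apply (derivable_pt_lim_mult e e); auto. }
  assert (A3 : forall x, 0 < x < 1 ->
     ((u2 x - TU2 x) * e1 x + e1 x * (u2 x - TU2 x) +
      ((0 * qb x + lam^2 * qb1 x) * (e x * e x) + lam^2 * qb x * ((u1 x - TU1 x) * e x + e x * (u1 x - TU1 x))))
     <= K * (e1 x * e1 x + lam^2 * qb x * (e x * e x)) + B).
  { intros x Hx. assert (Hx' : in01 x) by (unfold in01; lra).
    specialize (Hueq x Hx'). specialize (HTeq x Hx'). specialize (HDQ x Hx'). specialize (Hqb1 x Hx').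
    specialize (HMu x Hx'). specialize (Hqbl x Hx').
    replace (u2 x - TU2 x) with (- lam^2 * qb x * e x + lam^2 * (q x - qb x) * TU x) by (unfold e; lra).
    fold (e1 x) (e x).
    set (g := lam^2 * (q x - qb x) * TU x).
    assert (Hg : g * g <= B).
    { unfold g, B. assert (TU x * TU x <= Mu * Mu).
      { pose proof (Rabs_pos (TU x)).
        assert (Rabs (TU x) * Rabs (TU x) = TU x * TU x) by (rewrite <- Rabs_mult; apply Rabs_right; nra). nra. }
      replace (lam ^ 2 * (q x - qb x) * TU x * (lam ^ 2 * (q x - qb x) * TU x))
        with (lam^4 * ((q x - qb x) * (q x - qb x)) * (TU x * TU x)) by ring.
      assert (0 <= lam^4) by (apply pow_le; lra).
      assert (0 <= (q x - qb x) * (q x - qb x)) by (apply Rle_0_sqr).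
      apply Rmult_le_compat; try nra. }
    assert (Hq1 : qb1 x * (e x * e x) <= eta' * (qb x * (e x * e x))).
    { pose proof (Rle_abs (qb1 x)). assert (0 <= e x * e x) by nra. nra. }
    assert (0 <= lam^2) by nra.
    assert (0 <= qb x) by lra. assert (0 <= qb x * (e x * e x)) by nra.
    assert (2 * (e1 x * g) <= e1 x * e1 x + g * g) by (pose proof (Rle_0_sqr (e1 x - g)); unfold Rsqr in *; nra).
    assert (lam^2 * (qb1 x * (e x * e x)) <= lam^2 * (eta' * (qb x * (e x * e x)))) by (apply Rmult_le_compat_l; auto).
    assert (0 <= lam^2 * (qb x * (e x * e x))) by (apply Rmult_le_pos; auto).
    unfold K. nra. }
  pose proof (gronwall _ _ K B HK A1 A2 A3 t Ht) as G. cbv beta in G.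
  unfold e1, e in G. rewrite HT0, HT10 in G.
  replace ((u1 0 - u1 0) * (u1 0 - u1 0) + lam ^ 2 * qb 0 * ((u 0 - u 0) * (u 0 - u 0))) with 0 in G by ring.
  fold (e1 t) (e t) in G.
  assert (HB0 : 0 <= B) by (unfold B; apply Rmult_le_pos; [apply Rmult_le_pos; auto; apply pow_le; lra | apply Rle_0_sqr]).
  assert (HEK : exp (K * t) <= exp K) by (apply exp_le; destruct Ht; nra).
  assert (HG2 : e1 t * e1 t + lam ^ 2 * qb t * (e t * e t) <= B * exp K).
  { eapply Rle_trans. apply G. rewrite Rplus_0_l.
    assert (0 <= B / K) by (apply Rmult_le_pos; auto; left; apply Rinv_0_lt_compat; auto).
    assert (B / K <= B). { unfold Rdiv. replace B with (B * 1) at 2 by ring. apply Rmult_le_compat_l; auto.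
      replace 1 with (/1) by field. apply Rinv_le_contravar; unfold K; lra. }
    pose proof (exp_pos K). pose proof (exp_pos (K * t)). nra. }
  specialize (Hqbl t Ht).
  assert (He2 : lam^2 * eta1b * (e t * e t) <= lam^4 * DQ2 * (Mu * Mu) * exp K).
  { assert (0 <= e t * e t) by nra. assert (0 <= lam^2) by nra.
    assert (lam^2 * eta1b * (e t * e t) <= lam ^ 2 * qb t * (e t * e t)) by
      (apply Rmult_le_compat_r; auto; apply Rmult_le_compat_l; auto).
    fold B. nra. }
  apply abs_of_sq. nra.
  assert (Hl2 : 0 < lam^2) by nra.
  assert (HH : e t * e t * (lam^2 * eta1b) <= (eps * Mu) * (eps * Mu) * (lam^2 * eta1b)).
  { replace ((eps * Mu) * (eps * Mu) * (lam^2 * eta1b)) with (lam^2 * (eps^2 * eta1b) * (Mu * Mu)) by ring.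
    eapply Rle_trans. rewrite Rmult_comm. apply He2.
    replace (lam ^ 4 * DQ2 * (Mu * Mu) * exp K) with (lam^2 * (lam^2 * DQ2 * exp K) * (Mu * Mu)) by ring.
    apply Rmult_le_compat_r. nra. apply Rmult_le_compat_l. lra. unfold K; auto. }
  apply Rmult_le_reg_r with (lam^2 * eta1b). nra. auto.
Qed.


Lemma deriv_zero f l : derivable_pt_lim f 0 l -> (forall t, in01 t -> f t = 0) -> l = 0.
Proof.
  intros H Hz. destruct (Req_dec l 0) as [|Hn]; auto. exfalso.
  destruct (H (Rabs l) (Rabs_pos_lt _ Hn)) as [d Hd].
  set (h := Rmin (d/2) (1/2)).
  assert (Hh1 := Rmin_l (d/2) (1/2)). assert (Hh2 := Rmin_r (d/2) (1/2)).
  assert (Hh0 : 0 < Rmin (d/2) (1/2)) by (apply Rmin_pos; [pose proof (cond_pos d)|]; lra).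
  specialize (Hd (Rmin (d/2) (1/2)) ltac:(lra) ltac:(rewrite Rabs_right; pose proof (cond_pos d); lra)).
  rewrite Rplus_0_l, !Hz in Hd by (unfold in01; lra).
  replace ((0 - 0) / Rmin (d / 2) (1 / 2) - l) with (- l) in Hd by (field; lra).
  rewrite Rabs_Ropp in Hd. lra.
Qed.

Lemma sol_of_T lam q TU TU1 TU2 :
  (forall t, derivable_pt_lim TU t (TU1 t)) -> (forall t, derivable_pt_lim TU1 t (TU2 t)) ->
  (forall t, in01 t -> TU2 t = - lam^2 * q t * TU t) ->
  has_deriv_on01 TU TU1 /\ has_deriv_on01 TU1 TU2 /\ (forall t, in01 t -> TU2 t + lam^2 * q t * TU t = 0).
Proof.
  intros H1 H2 H3. split; [apply has_deriv_of; auto|]. split; [apply has_deriv_of; auto|].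
  intros t Ht. rewrite H3; auto. ring.
Qed.

Lemma basis_lemma lam q qb Mq Mb u u1 u2 v v1 v2 TU TU1 TU2 TV TV1 TV2 :
  (forall t, in01 t -> Rabs (q t) <= Mq) -> (forall t, in01 t -> Rabs (qb t) <= Mb) ->
  has_deriv_on01 u u1 -> has_deriv_on01 u1 u2 -> (forall t, in01 t -> u2 t + lam^2 * qb t * u t = 0) ->
  has_deriv_on01 v v1 -> has_deriv_on01 v1 v2 -> (forall t, in01 t -> v2 t + lam^2 * qb t * v t = 0) ->
  (forall a b : R, (forall t, in01 t -> a * u t + b * v t = 0) -> a = 0 /\ b = 0) ->
  (forall t, derivable_pt_lim TU t (TU1 t)) -> (forall t, derivable_pt_lim TU1 t (TU2 t)) ->
  (forall t, in01 t -> TU2 t = - lam^2 * q t * TU t) -> TU 0 = u 0 -> TU1 0 = u1 0 ->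
  (forall t, derivable_pt_lim TV t (TV1 t)) -> (forall t, derivable_pt_lim TV1 t (TV2 t)) ->
  (forall t, in01 t -> TV2 t = - lam^2 * q t * TV t) -> TV 0 = v 0 -> TV1 0 = v1 0 ->
  is_basis01 lam q TU TV.
Proof.
  intros HQ HQb Hu Hu1 Hue Hv Hv1 Hve Hind HT HT1 HTe HT0 HT10 HS HS1 HSe HS0 HS10.
  destruct (sol_of_T lam q TU TU1 TU2 HT HT1 HTe) as [A1 [A2 A3]].
  destruct (sol_of_T lam q TV TV1 TV2 HS HS1 HSe) as [B1 [B2 B3]].
  assert (Zd : forall a b, a * u 0 + b * v 0 = 0 -> a * u1 0 + b * v1 0 = 0 -> a = 0 /\ b = 0).
  { intros a b H0 H1. apply Hind. intros t Ht.
    apply (uniq_sol lam qb (fun t => a * u t + b * v t) (fun t => a * u1 t + b * v1 t) (fun t => a * u2 t + b * v2 t) Mb);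
      auto; try apply has_deriv_lin; auto.
    intros s Hs. specialize (Hue s Hs). specialize (Hve s Hs).
    replace (a * u2 s + b * v2 s + lam ^ 2 * qb s * (a * u s + b * v s)) with
      (a * (u2 s + lam ^ 2 * qb s * u s) + b * (v2 s + lam ^ 2 * qb s * v s)) by ring.
    rewrite Hue, Hve; ring. }
  split; [exists TU1, TU2; auto|]. split; [exists TV1, TV2; auto|]. split.
  - intros a b Hab. apply Zd.
    + rewrite <- HT0, <- HS0. apply Hab. unfold in01; lra.
    + rewrite <- HT10, <- HS10. apply (deriv_zero (fun t => a * TU t + b * TV t)); auto.
      apply (derivable_pt_lim_plus (fun t => a * TU t) (fun t => b * TV t)); apply derivable_pt_lim_scal; auto.
  - intros y [y1 [y2 [Hy [Hy1 Hye]]]].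
    set (W0 := u 0 * v1 0 - u1 0 * v 0).
    assert (HW : W0 <> 0).
    { intros HW0. destruct (Req_dec (v 0) 0) as [Hv0|Hv0]; [destruct (Req_dec (u 0) 0) as [Hu0|Hu0]|].
      - destruct (Zd (v1 0) (- u1 0)) as [Ha Hb]. rewrite Hv0, Hu0; ring. ring.
        destruct (Zd 1 0) as [Hc _]. rewrite Hu0, Hv0; ring. lra. lra.
      - destruct (Zd (v 0) (- u 0)) as [Ha Hb]. ring. unfold W0 in HW0. lra. lra.
      - destruct (Zd (v 0) (- u 0)) as [Ha Hb]. ring. unfold W0 in HW0. lra. lra. }
    set (a := (y 0 * v1 0 - y1 0 * v 0) / W0). set (b := (u 0 * y1 0 - u1 0 * y 0) / W0).
    exists a, b. intros t Ht.
    assert (Hz : forall t, in01 t -> 1 * (1 * y t + (- a) * TU t) + (- b) * TV t = 0).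
    { apply (uniq_sol lam q _ (fun t => 1 * (1 * y1 t + (- a) * TU1 t) + (- b) * TV1 t)
         (fun t => 1 * (1 * y2 t + (- a) * TU2 t) + (- b) * TV2 t) Mq); auto.
      - apply (has_deriv_lin 1 (fun t => 1 * y t + (- a) * TU t) _ (-b) TV); auto. apply has_deriv_lin; auto.
      - apply (has_deriv_lin 1 (fun t => 1 * y1 t + (- a) * TU1 t) _ (-b) TV1); auto. apply has_deriv_lin; auto.
      - intros s Hs. specialize (Hye s Hs). specialize (A3 s Hs). specialize (B3 s Hs).
        replace (1 * (1 * y2 s + - a * TU2 s) + - b * TV2 s + lam ^ 2 * q s * (1 * (1 * y s + - a * TU s) + - b * TV s))
          with ((y2 s + lam ^ 2 * q s * y s) - a * (TU2 s + lam ^ 2 * q s * TU s) - b * (TV2 s + lam ^ 2 * q s * TV s)) by ring.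
        rewrite Hye, A3, B3. ring.
      - rewrite HT0, HS0. unfold a, b, W0. unfold W0 in HW. field. auto.
      - rewrite HT10, HS10. unfold a, b, W0. unfold W0 in HW. field. auto. }
    specialize (Hz t Ht). lra.
Qed.


Lemma sup_exists TU : (forall t, continuity_pt TU t) ->
  exists Mu, is_sup_abs01 TU Mu /\ 0 <= Mu /\ (forall t, in01 t -> Rabs (TU t) <= Mu).
Proof.
  intros H. destruct (continuity_ab_maj (fun t => Rabs (TU t)) 0 1 ltac:(lra)) as [M [HM1 HM2]].
  { intros c _. apply continuity_pt_comp with (f2 := Rabs); auto. apply Rcontinuity_abs. }
  exists (Rabs (TU M)). split; [|split; [apply Rabs_pos|]].
  - split.
    + intros r [t [Ht ->]]. apply HM1. exact Ht.
    + intros b Hb. apply Hb. exists M. split; auto.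
  - intros t Ht. apply HM1. exact Ht.
Qed.

Lemma picard_q lam q Mq a b : 0 <= Mq -> (forall t, continuity_pt q t) -> (forall t, in01 t -> Rabs (q t) <= Mq) ->
  exists W W1 H : R -> R,
    (forall t, derivable_pt_lim W t (W1 t)) /\ (forall t, derivable_pt_lim W1 t (H t)) /\
    (forall t, in01 t -> H t = - lam^2 * q t * W t) /\ W 0 = a /\ W1 0 = b.
Proof.
  intros HM Hc Hq.
  destruct (picard (fun s x => - lam^2 * q (clamp s) * x) (lam^2 * Mq) a b) as [W [W1 [H [H1 [H2 [H3 [H4 [H5 H6]]]]]]]].
  - pose proof (pow2_ge_0 lam). nra.
  - intros s x y. replace (- lam ^ 2 * q (clamp s) * x - - lam ^ 2 * q (clamp s) * y) with
       (- lam^2 * q (clamp s) * (x - y)) by ring.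
    rewrite !Rabs_mult, Rabs_Ropp. rewrite (Rabs_right (lam^2)) by (apply Rle_ge, pow2_ge_0).
    pose proof (Hq (clamp s) (clamp_in01 s)). pose proof (pow2_ge_0 lam). pose proof (Rabs_pos (x - y)).
    apply Rmult_le_compat_r; auto. apply Rmult_le_compat_l; auto.
  - intros x s0. apply (continuity_pt_comp (fun s => q (clamp s)) (fun z => - lam^2 * z * x)).
    apply (continuity_pt_comp clamp q). apply clamp_cont. apply Hc.
    apply derivable_continuous_pt. exists (- lam^2 * 1 * x).
    apply (derivable_pt_lim_mult (fun z => - lam^2 * z) (fun _ => x)) with (l1 := - lam^2 * 1) (l2 := 0) ||
    (apply dpl_l with ((- lam^2 * 1) * x + (- lam^2 * q (clamp s0)) * 0); [ring|]).
    apply (derivable_pt_lim_mult (fun z => - lam^2 * z) (fun _ => x)).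
    apply (derivable_pt_lim_scal (fun z => z)). apply derivable_pt_lim_id. apply derivable_pt_lim_const.
  - exists W, W1, H. repeat split; auto. intros t Ht. rewrite H6 by auto. rewrite clamp_id by auto. ring.
Qed.

Lemma approx_main lam q qb qb1 eps Mq Mb DQ2 eta' eta1b alpha alpha' :
  0 < lam -> (forall t, continuity_pt q t) -> (forall t, in01 t -> Rabs (q t) <= Mq) ->
  has_deriv_on01 qb qb1 -> (forall t, in01 t -> eta1b <= qb t) -> 0 < eta1b ->
  (forall t, in01 t -> Rabs (qb t) <= Mb) ->
  (forall t, in01 t -> Rabs (qb1 t) <= eta' * qb t) -> 0 <= eta' ->
  (forall t, in01 t -> (q t - qb t) * (q t - qb t) <= DQ2) ->
  lam^2 * DQ2 * exp (1 + eta') <= eps^2 * eta1b -> 0 <= eps ->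
  is_phase_function lam qb alpha alpha' -> is_approx_phase_function eps lam q alpha alpha'.
Proof.
  intros Hlam Hqc HqM Hqb Hqbl Heb HqbM Hqb1 Het HDQ Hfin Heps [_ [_ [[u1 [u2 [Hu [Hu1 Hue]]]] [[v1 [v2 [Hv [Hv1 Hve]]]] [Hind _]]]]].
  set (u := phase_u alpha alpha') in *. set (v := phase_v alpha alpha') in *.
  assert (HMq : 0 <= Mq) by (pose proof (HqM 0 ltac:(unfold in01; lra)); pose proof (Rabs_pos (q 0)); lra).
  destruct (picard_q lam q Mq (u 0) (u1 0) HMq Hqc HqM) as [TU [TU1 [TU2 [T1 [T2 [T3 [T4 T5]]]]]]].
  destruct (picard_q lam q Mq (v 0) (v1 0) HMq Hqc HqM) as [TV [TV1 [TV2 [S1 [S2 [S3 [S4 S5]]]]]]].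
  exists TU, TV. split.
  { apply (basis_lemma lam q qb Mq Mb u u1 u2 v v1 v2 TU TU1 TU2 TV TV1 TV2); auto. }
  destruct (sup_exists TU) as [Mu [HMu1 [HMu2 HMu3]]].
  { intros t; apply derivable_continuous_pt; eexists; apply T1. }
  destruct (sup_exists TV) as [Mv [HMv1 [HMv2 HMv3]]].
  { intros t; apply derivable_continuous_pt; eexists; apply S1. }
  exists Mu, Mv. split; auto. split; auto. intros t Ht. split.
  - apply (est_lemma lam q qb qb1 u u1 u2 TU TU1 TU2 eps Mu DQ2 eta' eta1b); auto.
  - apply (est_lemma lam q qb qb1 v v1 v2 TV TV1 TV2 eps Mv DQ2 eta' eta1b); auto.
Qed.


Lemma pow_exp_bound n x : 0 <= x -> x ^ n <= exp (INR n * x).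
Proof.
  intros Hx. induction n.
  - simpl. rewrite Rmult_0_l, exp_0. lra.
  - rewrite S_INR. replace ((INR n + 1) * x) with (x + INR n * x) by ring. rewrite exp_plus. simpl.
    pose proof (exp_ineq1_le x). assert (0 <= x ^ n) by (apply pow_le; auto).
    apply Rmult_le_compat; lra.
Qed.

Lemma exp_neg_bound y : y <= 0 -> exp y <= / (1 - y).
Proof.
  intros H. pose proof (exp_ineq1_le (- y)). pose proof (exp_pos y).
  assert (exp y * exp (- y) = 1) by (rewrite <- exp_plus; replace (y + - y) with 0 by ring; apply exp_0).
  apply Rmult_le_reg_r with (1 - y). lra. rewrite Rinv_l by lra. nra.
Qed.

Lemma poly_exp_small n X Z c : 0 <= X -> 0 < c -> INR n * X + Z <= 1 - / c ->
  INR n * X + Z <= 0 -> X ^ n * exp Z <= c.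
Proof.
  intros HX Hc H1 H2. eapply Rle_trans.
  apply Rmult_le_compat_r. left; apply exp_pos. apply pow_exp_bound; auto.
  rewrite <- exp_plus. eapply Rle_trans. apply exp_neg_bound; auto.
  replace c with (/ / c) by (field; lra). apply Rinv_le_contravar.
  apply Rinv_0_lt_compat; auto. lra.
Qed.


Lemma Rmax_lip x y m : Rabs (Rmax x m - Rmax y m) <= Rabs (x - y).
Proof.
  unfold Rmax. destruct (Rle_dec x m); destruct (Rle_dec y m);
  unfold Rabs; repeat match goal with |- context [Rcase_abs ?a] => destruct (Rcase_abs a) end; lra.
Qed.

Lemma pow4_le x y : 0 <= x <= y -> x ^ 4 <= y ^ 4.
Proof. intros [H1 H2]. apply pow_incr. lra. Qed.

Theorem theorem4p2
  (q : R -> R) (Dq : nat -> R -> R) (eta1 eta2 lam eps : R) (pb : R -> R) :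
  is_derivs q Dq ->
  (forall t, 0 < q t) ->
  0 < eta1 -> eta1 < eta2 ->
  (forall t, in01 t ->
     eta1 <= q t <= eta2 /\
     Rabs (Dq 1%nat t / q t) <= eta2 /\
     Rabs (p_of q (Dq 1%nat) (Dq 2%nat) t) <= eta2) ->
  0 < lam ->
  0 < eps -> eps < lam * exp (Rpower eta2 (3 / 4) / 4) ->
  smooth pb ->
  (let k := 20 * (eta2 / eta1) ^ 2 + 8 * eta2 ^ 2 + 10 * (eta2 / eta1) + 1 in
   forall t, in01 t ->
     Rabs (p_of q (Dq 1%nat) (Dq 2%nat) t - pb t)
       <= 1 / 2 * (eta1 / lam) * exp (- k) * exp (- (Rpower eta2 (3 / 4) / 4)) * eps) ->
  exists qb qb1 qb2 : R -> R,
    has_deriv_on01 qb qb1 /\ has_deriv_on01 qb1 qb2 /\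
    (forall t, in01 t -> qb t <> 0) /\
    (forall t, in01 t -> p_of qb qb1 qb2 t = pb t) /\
    (forall alpha alpha' : R -> R,
       is_phase_function lam qb alpha alpha' ->
       is_approx_phase_function eps lam q alpha alpha').
Proof.
  intros [HD0 HDs] Hpos He1 He12 Hbnd Hlam Heps Heps2 [Dp [Hp0 Hps]] Hclose.
  cbv zeta in Hclose.
  set (k := 20 * (eta2 / eta1) ^ 2 + 8 * eta2 ^ 2 + 10 * (eta2 / eta1) + 1) in *.
  set (s := Rpower eta2 (3 / 4) / 4) in *.
  set (delta := 1 / 2 * (eta1 / lam) * exp (- k) * exp (- s) * eps) in *.
  set (q1 := Dq 1%nat). set (q2 := Dq 2%nat).
  set (p := p_of q q1 q2) in *.
  assert (Hdq : forall x, derivable_pt_lim q x (q1 x)).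
  { intros x. pose proof (HDs 0%nat x). rewrite HD0 in H. exact H. }
  assert (Hdq1 : forall x, derivable_pt_lim q1 x (q2 x)) by (intros; apply HDs).
  assert (Hqc : forall x, continuity_pt q x) by (intros; apply derivable_continuous_pt; eexists; apply Hdq).
  assert (Hpbc : forall x, continuity_pt pb x).
  { intros x. rewrite <- Hp0. apply derivable_continuous_pt. eexists; apply Hps. }
  assert (Hs0 : 0 <= s) by (unfold s, Rpower; pose proof (exp_pos (3/4 * ln eta2)); lra).
  assert (Hk : 8 * eta2^2 + 31 <= k).
  { unfold k. assert (1 < eta2 / eta1) by (apply Rmult_lt_reg_r with eta1; auto; unfold Rdiv; rewrite Rmult_assoc, Rinv_l; lra).
    revert H. generalize (eta2 / eta1). intros r Hr.
    assert (1 <= r^2) by (simpl; rewrite Rmult_1_r; apply Rle_trans with (1 * r); nra). lra. }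
  assert (Hdel0 : 0 < delta).
  { unfold delta. pose proof (exp_pos (-k)). pose proof (exp_pos (-s)).
    assert (0 < eta1 / lam) by (apply Rdiv_lt_0_compat; auto). 
    apply Rmult_lt_0_compat; [|lra]. apply Rmult_lt_0_compat; [|auto]. apply Rmult_lt_0_compat; [|auto]. apply Rmult_lt_0_compat; lra. }
  assert (Hlamdel : lam * delta = 1/2 * eta1 * exp (- k) * (exp (- s) * eps)).
  { unfold delta. field. lra. }
  assert (Hes : exp (- s) * eps < lam).
  { assert (exp (- s) * exp s = 1) by (rewrite <- exp_plus; replace (- s + s) with 0 by ring; apply exp_0).
    pose proof (exp_pos (- s)). nra. }
  assert (Hes1 : exp (- s) * eps <= eps).
  { assert (exp (- s) <= 1) by (rewrite <- exp_0; apply exp_le; lra). nra. }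
  assert (Hdel1 : delta < 1/2 * eta1 * exp (- k)).
  { pose proof (exp_pos (-k)). apply Rmult_lt_reg_l with lam; auto. rewrite Hlamdel. 
    assert (0 < 1/2 * eta1 * exp (- k)) by nra. nra. }
  set (m := w0f (fun _ => 2 * eta2) 0).
  assert (Hm0 : 0 < m) by apply w0f_pos.
  assert (Hm4 : m ^ 4 = / (2 * eta2)) by (apply (w0f_pow4 (fun _ => 2 * eta2)); lra).
  assert (Hm4' : m ^ 4 * (2 * eta2) = 1) by (rewrite Hm4; field; lra).
  set (w0 := w0f q). set (w0' := w0d q q1). set (w0'' := w0dd q q1 q2).
  assert (Hw0d : forall x, derivable_pt_lim w0 x (w0' x)) by (intros; apply w0_der; auto).
  assert (Hw0dd : forall x, derivable_pt_lim w0' x (w0'' x)) by (intros; apply w0d_der; auto).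
  assert (Hw0p : forall x, 0 < w0 x) by (intros; apply w0f_pos).
  assert (Hw04 : forall x, w0 x ^ 4 * q x = 1) by (intros x; unfold w0; rewrite w0f_pow4 by auto; field; pose proof (Hpos x); lra).
  assert (Hw0ode : forall x, w0'' x = p x / (4 * w0 x ^ 3)).
  { intros x. unfold p. rewrite <- (w0_ode q q1 q2 x) by auto. fold w0 w0''. field. pose proof (Hw0p x); lra. }
  assert (Hw0m : forall t, in01 t -> 1.18 * m <= w0 t).
  { intros t Ht. destruct (Hbnd t Ht) as [[Hq1 Hq2] _].
    apply pow4_mono. nra. auto.
    assert (w0 t ^ 4 * eta2 >= 1) by (pose proof (Hw04 t); pose proof (pow_le (w0 t) 4 ltac:(pose proof (Hw0p t); lra)); nra).
    replace ((1.18 * m)^4) with (1.18^4 * m^4) by ring. nra. }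
  assert (Hw0d_b : forall t, in01 t -> Rabs (w0' t) <= 1/4 * w0 t * eta2).
  { intros t Ht. destruct (Hbnd t Ht) as [_ [Hr _]]. unfold w0', w0d. fold w0.
    rewrite !Rabs_mult. rewrite Rabs_Ropp. rewrite (Rabs_right (1/4)) by lra. rewrite (Rabs_right (w0 t)) by (pose proof (Hw0p t); lra).
    fold q1 in Hr. pose proof (Hw0p t). apply Rmult_le_compat_l. nra. auto. }
  set (Pb := eta2 + delta).
  assert (HPb : forall t, in01 t -> Rabs (pb t) <= Pb).
  { intros t Ht. destruct (Hbnd t Ht) as [_ [_ Hp]]. specialize (Hclose t Ht). fold q1 q2 p in Hp, Hclose.
    replace (pb t) with (p t + - (p t - pb t)) by ring. eapply Rle_trans. apply Rabs_triang. rewrite Rabs_Ropp. unfold Pb. lra. }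
  set (Gf := fun s x => pb (clamp s) * / (4 * (Rmax x m) ^ 3)).
  destruct (picard Gf (Pb * (3 / (4 * m ^ 4))) (w0 0) (w0' 0)) as [W [W1 [H [HW [HW1 [_ [HW0 [HW10 HWe]]]]]]]].
  { apply Rmult_le_pos. unfold Pb; lra. apply Rmult_le_pos. lra. left; apply Rinv_0_lt_compat. nra. }
  { intros s0 x y. unfold Gf. rewrite <- Rmult_minus_distr_l, Rabs_mult.
    pose proof (HPb (clamp s0) (clamp_in01 s0)).
    assert (Hm1 : m <= Rmax x m) by apply Rmax_r. assert (Hm2 : m <= Rmax y m) by apply Rmax_r.
    pose proof (inv3_lip m _ _ Hm0 Hm1 Hm2) as Hi3. pose proof (Rmax_lip x y m) as Hrl.
    pose proof (Rabs_pos (pb (clamp s0))).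
    assert (0 <= 3 / (4 * m^4)) by (apply Rmult_le_pos; [lra|left; apply Rinv_0_lt_compat; nra]).
    rewrite Rmult_assoc. apply Rmult_le_compat; auto. apply Rabs_pos.
    eapply Rle_trans. apply Hi3. apply Rmult_le_compat_l; auto. }
  { intros x s0. unfold Gf. apply (continuity_pt_comp (fun s => pb (clamp s)) (fun z => z * / (4 * Rmax x m ^ 3))).
    apply (continuity_pt_comp clamp pb). apply clamp_cont. apply Hpbc.
    apply derivable_continuous_pt. eexists.
    apply (derivable_pt_lim_mult (fun z => z) (fun _ => / (4 * Rmax x m ^ 3))). apply derivable_pt_lim_id. apply derivable_pt_lim_const. }
  set (Lp := eta2 * (3 / (4 * m ^ 4))).
  assert (HLp : Lp = 3/2 * eta2 ^ 2) by (unfold Lp; rewrite Hm4; field; lra).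
  set (Kd := Lp + 2). set (A := delta / (4 * m ^ 3)).
  assert (HA0 : 0 < A) by (unfold A; apply Rdiv_lt_0_compat; auto; assert (0 < m^3) by (apply pow_lt; lra); lra).
  assert (HKd : 2 <= Kd) by (unfold Kd; rewrite HLp; nra).
  assert (Hdd : forall x, in01 x -> Rabs (H x - w0'' x) <= A + Lp * Rabs (W x - w0 x)).
  { intros x Hx. rewrite (HWe x Hx). unfold Gf. rewrite clamp_id by auto. rewrite Hw0ode.
    assert (HY : Rmax (w0 x) m = w0 x) by (apply Rmax_left; pose proof (Hw0m x Hx); lra).
    replace (p x / (4 * w0 x ^ 3)) with (p x * / (4 * (Rmax (w0 x) m) ^ 3)) by (rewrite HY; field; pose proof (Hw0p x); lra).
    replace (pb x * / (4 * Rmax (W x) m ^ 3) - p x * / (4 * Rmax (w0 x) m ^ 3)) with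
      (- (p x - pb x) * / (4 * Rmax (W x) m ^ 3) + p x * (/ (4 * Rmax (W x) m ^ 3) - / (4 * Rmax (w0 x) m ^ 3))) by ring.
    eapply Rle_trans. apply Rabs_triang. rewrite !Rabs_mult, Rabs_Ropp.
    assert (Hm1 : m <= Rmax (W x) m) by apply Rmax_r. assert (Hm2 : m <= Rmax (w0 x) m) by apply Rmax_r.
    pose proof (inv3_lip m _ _ Hm0 Hm1 Hm2) as Hi3. pose proof (Rmax_lip (W x) (w0 x) m) as Hrl.
    destruct (Hbnd x Hx) as [_ [_ Hp]]. specialize (Hclose x Hx). fold q1 q2 p in Hp, Hclose.
    assert (Hinv : Rabs (/ (4 * Rmax (W x) m ^ 3)) <= / (4 * m ^ 3)).
    { assert (0 < m^3) by (apply pow_lt; lra).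
      assert (0 < Rmax (W x) m) by lra. assert (0 < Rmax (W x) m ^ 3) by (apply pow_lt; lra).
      rewrite Rabs_right. apply Rinv_le_contravar. lra. apply Rmult_le_compat_l. lra. apply pow_incr. lra.
      left; apply Rinv_0_lt_compat. lra. }
    apply Rplus_le_compat.
    - unfold A. unfold Rdiv. apply Rmult_le_compat; auto; apply Rabs_pos.
    - unfold Lp. rewrite Rmult_assoc. apply Rmult_le_compat; auto; try apply Rabs_pos.
      eapply Rle_trans. apply Hi3. apply Rmult_le_compat_l; auto.
      apply Rmult_le_pos. lra. left; apply Rinv_0_lt_compat. nra. }
  set (Ed := fun t => (W1 t - w0' t) * (W1 t - w0' t) + (W t - w0 t) * (W t - w0 t)).
  assert (HEd : forall t, in01 t -> Ed t <= A ^ 2 * exp Kd).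
  { intros t Ht.
    assert (G1 : forall x, in01 x -> limit1_in Ed in01 (Ed x) x).
    { intros x Hx. apply limit_within_of_cont. apply derivable_continuous_pt. eexists.
      unfold Ed. apply (derivable_pt_lim_plus (fun t => (W1 t - w0' t) * (W1 t - w0' t)) (fun t => (W t - w0 t) * (W t - w0 t)));
      apply derivable_pt_lim_mult; apply derivable_pt_lim_minus; auto. }
    assert (G2 : forall x, 0 < x < 1 -> derivable_pt_lim Ed x
       ((H x - w0'' x) * (W1 x - w0' x) + (W1 x - w0' x) * (H x - w0'' x) +
        ((W1 x - w0' x) * (W x - w0 x) + (W x - w0 x) * (W1 x - w0' x)))).
    { intros x Hx. unfold Ed. apply (derivable_pt_lim_plus (fun t => (W1 t - w0' t) * (W1 t - w0' t)) (fun t => (W t - w0 t) * (W t - w0 t))).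
      apply (derivable_pt_lim_mult (fun t => W1 t - w0' t) (fun t => W1 t - w0' t)); apply (derivable_pt_lim_minus W1 w0'); auto.
      apply (derivable_pt_lim_mult (fun t => W t - w0 t) (fun t => W t - w0 t)); apply (derivable_pt_lim_minus W w0); auto. }
    assert (G3 : forall x, 0 < x < 1 ->
       (H x - w0'' x) * (W1 x - w0' x) + (W1 x - w0' x) * (H x - w0'' x) +
        ((W1 x - w0' x) * (W x - w0 x) + (W x - w0 x) * (W1 x - w0' x)) <= Kd * Ed x + A ^ 2).
    { intros x Hx. assert (Hx' : in01 x) by (unfold in01; lra). specialize (Hdd x Hx').
      unfold Ed, Kd. set (a := W1 x - w0' x). set (b := W x - w0 x). set (c := H x - w0'' x). fold a b c in Hdd.
      assert (HLp0 : 0 <= Lp) by (rewrite HLp; nra).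
      pose proof (two_ab a A). pose proof (two_ab a b). rewrite (Rabs_mult a A), (Rabs_right A) in H0 by lra.
      assert (c * a <= Rabs a * (A + Lp * Rabs b)).
      { eapply Rle_trans. apply Rle_abs. rewrite Rabs_mult, Rmult_comm. apply Rmult_le_compat_l; auto. apply Rabs_pos. }
      assert (a * b <= Rabs (a * b)) by apply Rle_abs.
      rewrite Rabs_mult in H1, H3.
      assert (Lp * (2 * (Rabs a * Rabs b)) <= Lp * (a * a + b * b)) by (apply Rmult_le_compat_l; auto).
      nra. }
    pose proof (gronwall Ed _ Kd (A^2) ltac:(lra) G1 G2 G3 t Ht) as G.
    assert (HE0 : Ed 0 = 0) by (unfold Ed; rewrite HW0, HW10; ring).
    rewrite HE0, Rplus_0_l in G.
    assert (exp (Kd * t) <= exp Kd) by (apply exp_le; destruct Ht; nra).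
    assert (0 < A^2 / Kd) by (apply Rdiv_lt_0_compat; nra).
    assert (A^2 / Kd <= A^2). { unfold Rdiv. replace (A^2) with (A^2 * 1) at 2 by ring. apply Rmult_le_compat_l. nra.
      replace 1 with (/1) by field. apply Rinv_le_contravar; lra. }
    pose proof (exp_pos Kd). pose proof (exp_pos (Kd * t)). nra. }
  set (R2 := A ^ 2 * exp Kd).
  assert (Hexpk : exp (- k) * exp (- k) * exp Kd = exp (Kd - 2 * k)).
  { rewrite <- !exp_plus. f_equal. ring. }
  assert (Hpe : eta2 ^ 4 * exp (Kd - 2 * k) <= 1 / 2).
  { apply poly_exp_small. lra. lra. replace (INR 4) with 4 by (simpl; ring). unfold Kd. rewrite HLp. nra.
    replace (INR 4) with 4 by (simpl; ring). unfold Kd. rewrite HLp. nra. }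
  assert (Hm8 : m ^ 8 * (4 * eta2 ^ 2) = 1).
  { replace (m^8) with (m^4 * m^4) by ring. rewrite Hm4. field. lra. }
  assert (X1 : delta ^ 2 * exp Kd <= m ^ 8 / 2).
  { assert (Hd2 : delta ^ 2 <= 1/4 * eta2 ^ 2 * (exp (- k) * exp (- k))).
    { pose proof (exp_pos (- k)). assert (delta <= 1/2 * eta2 * exp (- k)) by nra. nra. }
    assert (delta ^ 2 * exp Kd <= 1/4 * eta2 ^ 2 * exp (Kd - 2 * k)).
    { rewrite <- Hexpk. pose proof (exp_pos Kd). replace (1 / 4 * eta2 ^ 2 * (exp (- k) * exp (- k) * exp Kd)) with
         (1 / 4 * eta2 ^ 2 * (exp (- k) * exp (- k)) * exp Kd) by ring. apply Rmult_le_compat_r; lra. }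
    assert (0 < eta2^2) by nra.
    assert (1/4 * eta2 ^ 2 * exp (Kd - 2 * k) * (4 * eta2^2) <= 1/2) by nra.
    assert (m ^ 8 / 2 * (4 * eta2^2) = 1/2) by (rewrite <- Hm8; field).
    apply Rmult_le_reg_r with (4 * eta2^2). lra. nra. }
  assert (HR2 : R2 <= (18/100 * m) ^ 2).
  { unfold R2, A. assert (0 < m^6) by (apply pow_lt; lra).
    replace ((delta / (4 * m ^ 3)) ^ 2 * exp Kd) with (delta ^ 2 * exp Kd / (16 * m^6)) by (field; lra).
    apply Rmult_le_reg_r with (16 * m^6). lra.
    replace (delta ^ 2 * exp Kd / (16 * m ^ 6) * (16 * m ^ 6)) with (delta ^ 2 * exp Kd) by (field; lra).
    replace ((18 / 100 * m) ^ 2 * (16 * m ^ 6)) with (5184/10000 * m^8) by field.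
    assert (0 < m^8) by (apply pow_lt; lra). lra. }
  assert (HdW : forall t, in01 t -> Rabs (W t - w0 t) <= 18/100 * m /\ Rabs (W1 t - w0' t) <= 18/100 * m).
  { intros t Ht. specialize (HEd t Ht). unfold Ed in HEd.
    assert (HR2' : A^2 * exp Kd <= (18/100*m)*(18/100*m)) by (replace ((18/100*m)*(18/100*m)) with ((18/100*m)^2) by ring; exact HR2).
    assert (0 <= (W1 t - w0' t) * (W1 t - w0' t)) by apply Rle_0_sqr. assert (0 <= (W t - w0 t) * (W t - w0 t)) by apply Rle_0_sqr.
    split; apply abs_of_sq; lra. }
  assert (HWm : forall t, in01 t -> m <= W t /\ W t <= 116/100 * w0 t).
  { intros t Ht. destruct (HdW t Ht) as [H1 _]. apply Rabs_le_inv' in H1. pose proof (Hw0m t Ht). lra. }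
  assert (HH : forall t, in01 t -> H t = pb t / (4 * W t ^ 3)).
  { intros t Ht. rewrite HWe by auto. unfold Gf. rewrite clamp_id by auto.
    rewrite Rmax_left by (destruct (HWm t Ht); lra). unfold Rdiv; ring. }
  assert (HWp : forall t, in01 t -> 0 < W t) by (intros t Ht; destruct (HWm t Ht); lra).
  set (qb := fun t => / W t ^ 4). set (qb1 := fun t => -4 * W1 t / W t ^ 5).
  set (qb2 := fun t => 20 * W1 t ^ 2 / W t ^ 6 - 4 * H t / W t ^ 5).
  destruct (qb_derivs W W1 H HW HW1 HWp) as [Hqb Hqb1].
  exists qb, qb1, qb2. split; auto. split; auto. split.
  { intros t Ht. unfold qb. apply Rinv_neq_0_compat. apply pow_nonzero. pose proof (HWp t Ht); lra. }
  split.
  { intros t Ht. apply qb_pof. auto. apply HH; auto. }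
  intros alpha alpha' Hph.
  set (eta' := 6/5 * eta2 + 1). set (DQ2 := (4 / m ^ 5) ^ 2 * R2).
  apply (approx_main lam q qb qb1 eps eta2 (/ m ^ 4) DQ2 eta' (eta1 / 2)); auto.
  - intros t Ht. destruct (Hbnd t Ht) as [[Ha Hb] _]. rewrite Rabs_right by lra. lra.
  - intros t Ht. unfold qb. destruct (HWm t Ht) as [Hw1 Hw2].
    destruct (Hbnd t Ht) as [[Ha Hb] _]. pose proof (Hw04 t). pose proof (Hw0p t).
    assert (W t ^ 4 <= (116/100 * w0 t) ^ 4) by (apply pow4_le; lra).
    assert (0 < W t ^ 4) by (apply pow_lt; lra). assert (0 < w0 t ^ 4) by (apply pow_lt; lra).
    assert (eta1 * W t ^ 4 <= 2).
    { replace ((116/100 * w0 t) ^ 4) with ((116/100)^4 * w0 t ^ 4) in H1 by ring.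
      assert (eta1 * w0 t ^ 4 <= 1) by nra. nra. }
    apply Rmult_le_reg_r with (W t ^ 4). auto. rewrite Rinv_l by lra. lra.
  - lra.
  - intros t Ht. unfold qb. destruct (HWm t Ht) as [Hw1 Hw2].
    assert (0 < m^4) by (apply pow_lt; lra). assert (m^4 <= W t ^ 4) by (apply pow4_le; lra).
    rewrite Rabs_right. apply Rinv_le_contravar; auto. left; apply Rinv_0_lt_compat; lra.
  - intros t Ht. unfold qb1, qb. destruct (HWm t Ht) as [Hw1 Hw2]. destruct (HdW t Ht) as [_ Hd1].
    pose proof (Hw0d_b t Ht). pose proof (Hw0m t Ht). pose proof (Hw0p t). destruct (HdW t Ht) as [Hd0 _].
    apply Rabs_le_inv' in Hd0.
    assert (HW1b : Rabs (W1 t) <= 1/4 * w0 t * eta2 + 18/100 * m).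
    { replace (W1 t) with (w0' t + (W1 t - w0' t)) by ring. eapply Rle_trans. apply Rabs_triang. lra. }
    assert (0 < W t ^ 5) by (apply pow_lt; lra). assert (0 < W t ^ 4) by (apply pow_lt; lra).
    replace (-4 * W1 t / W t ^ 5) with (- (4 * W1 t) * / W t ^ 5) by (field; lra).
    rewrite Rabs_mult, Rabs_Ropp, Rabs_mult, (Rabs_right 4) by lra. rewrite (Rabs_right (/ W t ^ 5)) by (left; apply Rinv_0_lt_compat; auto).
    replace (eta' * / W t ^ 4) with (eta' * W t * / W t ^ 5) by (field; lra).
    apply Rmult_le_compat_r. left; apply Rinv_0_lt_compat; auto.
    unfold eta'. assert (eta2 * w0 t >= eta2 * (118/100 * m)) by nra. nra.
  - unfold eta'. lra.
  - intros t Ht. unfold qb. destruct (HWm t Ht) as [Hw1 Hw2]. destruct (HdW t Ht) as [Hd0 _].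
    pose proof (Hw0m t Ht). pose proof (Hw04 t). pose proof (Hw0p t). pose proof (Hpos t).
    assert (Hq : q t = / w0 t ^ 4).
    { assert (0 < w0 t ^4) by (apply pow_lt; lra). apply Rmult_eq_reg_l with (w0 t ^ 4); [|lra]. rewrite Rinv_r by lra. lra. }
    rewrite Hq. pose proof (inv4_lip m (w0 t) (W t) Hm0 ltac:(lra) Hw1) as Hi.
    assert (Hd2 : (W t - w0 t) * (W t - w0 t) <= R2).
    { specialize (HEd t Ht). unfold Ed in HEd. pose proof (Rle_0_sqr (W1 t - w0' t)). unfold Rsqr in *. fold R2 in HEd. lra. }
    unfold DQ2. set (c := 4 / m ^ 5). assert (Hc : 0 <= c) by (unfold c; apply Rmult_le_pos; [lra|left; apply Rinv_0_lt_compat, pow_lt; lra]).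
    set (x := / w0 t ^ 4 - / W t ^ 4). fold x in Hi.
    assert (Hx : Rabs x * Rabs x = x * x) by (rewrite <- Rabs_mult; apply Rabs_right; apply Rle_ge, Rle_0_sqr).
    assert (Hy : Rabs (w0 t - W t) * Rabs (w0 t - W t) = (W t - w0 t) * (W t - w0 t))
      by (rewrite <- Rabs_mult; rewrite Rabs_right; [ring | apply Rle_ge, Rle_0_sqr]).
    pose proof (Rabs_pos x). pose proof (Rabs_pos (w0 t - W t)).
    assert (Rabs x * Rabs x <= (c * Rabs (w0 t - W t)) * (c * Rabs (w0 t - W t))) by (apply Rmult_le_compat; auto).
    assert (c^2 * ((W t - w0 t) * (W t - w0 t)) <= c^2 * R2) by (apply Rmult_le_compat_l; auto; apply pow2_ge_0).
    nra.
  - set (Z := Kd - 2 * k + (1 + eta')).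
    assert (Hpe2 : eta2 ^ 5 * exp Z <= 1 / 8).
    { apply poly_exp_small. lra. lra. replace (INR 5) with 5 by (simpl; ring). unfold Z, Kd, eta'. rewrite HLp. nra.
      replace (INR 5) with 5 by (simpl; ring). unfold Z, Kd, eta'. rewrite HLp. nra. }
    assert (Hm16 : / m ^ 16 = 16 * eta2 ^ 4).
    { replace (m ^ 16) with ((m ^ 4) ^ 4) by ring. rewrite Hm4. field. lra. }
    assert (HL : lam ^ 2 * DQ2 * exp (1 + eta') = (lam * delta) ^ 2 * (/ m ^ 16) * (exp Kd * exp (1 + eta'))).
    { unfold DQ2, R2, A. field. lra. }
    rewrite Hm16 in HL.
    assert (HZ : exp (- k) * exp (- k) * (exp Kd * exp (1 + eta')) = exp Z).
    { unfold Z. rewrite <- !exp_plus. f_equal. ring. }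
    assert (Hld : (lam * delta) ^ 2 <= 1/4 * eta1 ^ 2 * (exp (- k) * exp (- k)) * eps ^ 2).
    { rewrite Hlamdel. pose proof (exp_pos (- s)). assert (0 < exp (- s) * eps) by nra.
      replace ((1 / 2 * eta1 * exp (- k) * (exp (- s) * eps)) ^ 2) with
        (1/4 * eta1 ^ 2 * (exp (- k) * exp (- k)) * ((exp (- s) * eps) * (exp (- s) * eps))) by field.
      apply Rmult_le_compat_l. pose proof (exp_pos (-k)). assert (0 <= eta1^2) by nra. nra.
      simpl. nra. }
    rewrite HL.
    assert (HE : 0 < exp Kd * exp (1 + eta')) by (pose proof (exp_pos Kd); pose proof (exp_pos (1 + eta')); nra).
    assert (H16 : 0 < 16 * eta2 ^ 4) by (assert (0 < eta2^4) by (apply pow_lt; lra); lra).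
    eapply Rle_trans. apply Rmult_le_compat_r. lra. apply Rmult_le_compat_r. lra. exact Hld.
    replace (1 / 4 * eta1 ^ 2 * (exp (- k) * exp (- k)) * eps ^ 2 * (16 * eta2 ^ 4) * (exp Kd * exp (1 + eta')))
      with (4 * eta1 * eps ^ 2 * (eta1 * eta2 ^ 4 * (exp (- k) * exp (- k) * (exp Kd * exp (1 + eta'))))) by field.
    rewrite HZ.
    assert (eta1 * eta2 ^ 4 * exp Z <= eta2 ^ 5 * exp Z).
    { apply Rmult_le_compat_r. left; apply exp_pos. replace (eta2^5) with (eta2 * eta2^4) by ring.
      apply Rmult_le_compat_r. apply pow_le; lra. lra. }
    assert (0 < 4 * eta1 * eps ^ 2) by (assert (0 < eps^2) by (apply pow_lt; lra); nra).
    apply Rle_trans with (4 * eta1 * eps ^ 2 * (1/8)). apply Rmult_le_compat_l; lra. lra.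
  - lra.
Qed.
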